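(* Let $\alpha\ge1$, let $n,m,k$ be integers with $2\le m\le k<n$, and let $\mathcal{A}$ be any single-pass streaming algorithm with memory $m$. Then for all sufficiently large $T$, there is an instance $\nu\in\mathcal{I}\cup\mathcal{I}'$ (defined in the context, with $\varepsilon=\frac14(k/T)^{\frac{1}{2+2\alpha}}$) on which $$\mathbb{E}_\nu[R(T)] > \frac{2}{16^{\alpha+1}}\cdot\frac{(k-m+1)\,T^{\frac{1}{\alpha+1}}}{k^{1+\frac{1}{\alpha+1}}}\sum_{i:\Delta_i(\nu)>0}\Delta_i(\nu)^{1-2\alpha}.$$ In particular the expected regret of $\mathcal{A}$ on some instance of this family is $\Omega\!\left(16^{-\alpha}\frac{(k-m+1)T^{\frac{1}{\alpha+1}}}{k^{1+\frac{1}{\alpha+1}}}\sum_{i:\Delta_i>0}\Delta_i^{1-2\alpha}\right)$.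
   Context: Streaming stochastic multi-armed bandit: $n$ arms arrive one by one in a stream; arm $i$ has Bernoulli rewards with mean $\mu_i$. At most $m$ arms can be stored in memory; in each of $T$ rounds the player may discard stored arms and read next arms from the stream, then pulls exactly one stored arm $A_t$; discarded or passed-over arms cannot be pulled again. $\Delta_i=\mu_*-\mu_i$ where $\mu_*=\max_j\mu_j$, and $\mathbb{E}_\nu[R(T)]=\mathbb{E}_\nu[\sum_{t=1}^T(\mu_*-\mu_{A_t})]$ when the algorithm runs on instance $\nu$. Hard instances: let $\varepsilon=\frac14\left(\frac{k}{T}\right)^{\frac{1}{2+2\alpha}}$, arms arriving in the stream in order $1,2,\dots,n$. $\nu_1$ has arm 1 with mean $\frac12+n\varepsilon$, arms $2,\dots,k$ with mean $\frac12+(n-1)\varepsilon$, and arms $k+1,\dots,n$ with mean $\frac12$. For $2\le i\le k$, $\nu_i$ equals $\nu_1$ except that arm $i$ has mean $\frac12+(n+1)\varepsilon$. $\mathcal{I}=\{\nu_1,\dots,\nu_k\}$. For each $i\in[k]$, $\nu_i'$ equals $\nu_i$ except that arms $k+1,\dots,n$ have mean $1$; $\mathcal{I}'=\{\nu_1',\dots,\nu_k'\}$. *)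

(* Defs.v *)
From Stdlib Require Import Reals List Lia Lra.
Import ListNotations.
Open Scope R_scope.

(** Arms are numbered 1..n and arrive in the stream in this order.
    The algorithm's state is (M, p): M = list of stored arms, p = index of
    the next unread arm in the stream (arms < p were read, stored or passed). *)

Record action := mkAction {
  act_mem : list nat;   (* memory after discarding / reading in this round *)
  act_ptr : nat;        (* next unread arm of the stream after this round *)
  act_pull : nat
}.

Definition state := (list nat * nat)%type.

Definition init_state : state := ([], 1%nat).

(** In a round the player may discard stored arms and read the next arms
    p, p+1, ..., q-1 from the stream (storing some of them, never exceeding
    memory m), then pulls one stored arm. *)
Definition valid_action (n m : nat) (s : state) (a : action) : Prop :=
  let (M, p) := s in
  (p <= act_ptr a <= S n)%nat /\
  NoDup (act_mem a) /\
  (length (act_mem a) <= m)%nat /\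
  (forall x, In x (act_mem a) ->
      In x M \/ (p <= x /\ x < act_ptr a)%nat) /\
  In (act_pull a) (act_mem a).

(** A history: the chronological list of (action, observed reward). *)
Definition history := list (action * bool).

Definition state_of (h : history) : state :=
  fold_left (fun _ ab => (act_mem (fst ab), act_ptr (fst ab))) h init_state.

Inductive hist_valid (n m : nat) : history -> Prop :=
| hv_nil : hist_valid n m []
| hv_snoc : forall h a b,
    hist_valid n m h -> valid_action n m (state_of h) a ->
    hist_valid n m (h ++ [(a, b)]).

Definition dist := list (R * action).

Definition dist_ok (d : dist) : Prop :=
  (forall w a, In (w, a) d -> 0 <= w) /\
  fold_right (fun wa acc => fst wa + acc) 0 d = 1.

(** A (possibly randomized) algorithm: given the horizon T and the history,
    a distribution over the next action. *)
Definition algorithm := nat -> history -> dist.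

Definition is_streaming_alg (n m : nat) (A : algorithm) : Prop :=
  forall T h, hist_valid n m h ->
    dist_ok (A T h) /\
    (forall w a, In (w, a) (A T h) -> valid_action n m (state_of h) a).

(** Instance = vector of Bernoulli means mu : nat -> R (arms 1..n). *)
Definition mu_star (n : nat) (mu : nat -> R) : R :=
  fold_right Rmax (mu 1%nat) (map mu (seq 1 n)).

Definition gap (n : nat) (mu : nat -> R) (i : nat) : R := mu_star n mu - mu i.

(** Expected remaining regret over s rounds from history h, when rewards of
    arm i are Bernoulli(mu i). *)
Fixpoint exp_regret_from (A : algorithm) (T : nat) (mu : nat -> R) (ms : R)
    (s : nat) (h : history) {struct s} : R :=
  match s with
  | O => 0
  | S s' =>
      fold_right
        (fun wa acc =>
           let w := fst wa in let a := snd wa in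
           let q := mu (act_pull a) in
           acc + w * ((ms - q)
                      + q * exp_regret_from A T mu ms s' (h ++ [(a, true)])
                      + (1 - q) * exp_regret_from A T mu ms s' (h ++ [(a, false)])))
        0 (A T h)
  end.

Definition exp_regret (n : nat) (A : algorithm) (T : nat) (mu : nat -> R) : R :=
  exp_regret_from A T mu (mu_star n mu) T [].

Definition sum_gap_pow (n : nat) (mu : nat -> R) (alpha : R) : R :=
  fold_right
    (fun i acc =>
       (if Rlt_dec 0 (gap n mu i) then Rpower (gap n mu i) (1 - 2 * alpha) else 0)
       + acc)
    0 (seq 1 n).

Definition eps (k T : nat) (alpha : R) : R :=
  / 4 * Rpower (INR k / INR T) (1 / (2 + 2 * alpha)).

(** Hard instances. [hard_mean n k e j primed] is the mean vector of nu_j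
    (primed = false) or nu_j' (primed = true), for 1 <= j <= k. *)
Definition hard_mean (n k : nat) (e : R) (j : nat) (primed : bool) (i : nat) : R :=
  if (andb (Nat.leb 2 j) (Nat.eqb i j)) then / 2 + INR (S n) * e
  else if Nat.eqb i 1 then / 2 + INR n * e
  else if Nat.leb i k then / 2 + INR (n - 1) * e
  else if primed then 1 else / 2.

(* Main.v *)
Require Import Defs.
From Stdlib Require Import Reals List Lia Lra Arith Bool ZArith FunctionalExtensionality.
Import ListNotations.
Open Scope R_scope.

Definition sumL (F : R * action -> R) (l : Defs.dist) : R :=
  fold_right (fun wa acc => acc + F wa) 0 l.

Lemma sumL_ext F G l : (forall wa, In wa l -> F wa = G wa) -> sumL F l = sumL G l.
Proof.
  induction l as [|x l IH]; simpl; intros H; auto.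
  rewrite IH by auto. rewrite (H x) by auto. reflexivity.
Qed.

Lemma sumL_le F G l : (forall wa, In wa l -> F wa <= G wa) -> sumL F l <= sumL G l.
Proof.
  induction l as [|x l IH]; simpl; intros H; [lra|].
  assert (H1 := H x (or_introl eq_refl)).
  assert (H2 : sumL F l <= sumL G l) by (apply IH; auto). lra.
Qed.

Lemma sumL_plus F G l : sumL (fun wa => F wa + G wa) l = sumL F l + sumL G l.
Proof. induction l; simpl; [lra|]. rewrite IHl. lra. Qed.

Lemma sumL_scal c F l : sumL (fun wa => c * F wa) l = c * sumL F l.
Proof. induction l; simpl; [lra|]. rewrite IHl. lra. Qed.

Lemma sumL_w (l : Defs.dist) c : fold_right (fun wa acc => fst wa + acc) 0 l = 1 ->
  sumL (fun wa => fst wa * c) l = c.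
Proof.
  intros H. transitivity (c * fold_right (fun wa acc => fst wa + acc) 0 l).
  - clear H. induction l; simpl; [lra|]. rewrite IHl. lra.
  - rewrite H. lra.
Qed.

Lemma state_of_snoc h a b : state_of (h ++ [(a, b)]) = (act_mem a, act_ptr a).
Proof. unfold state_of. rewrite fold_left_app. reflexivity. Qed.

Lemma hist_inv n m h : hist_valid n m h ->
  forall x, In x (fst (state_of h)) -> (x < snd (state_of h))%nat.
Proof.
  induction 1 as [|h a b Hh IH Hv].
  - simpl. tauto.
  - rewrite state_of_snoc. simpl. intros x Hx.
    destruct (state_of h) as [M p] eqn:E. simpl in IH.
    destruct Hv as (Hp & _ & _ & Hm & _).
    destruct (Hm x Hx) as [Hin|Hr]; [specialize (IH x Hin); lia| lia].
Qed.

Section EvSec.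
Variable A : algorithm.
Variable T : nat.

Fixpoint Ev (mu : nat -> R) (k : nat) (c : action -> R) (g : nat -> action -> R)
  (z : R) (s : nat) (h : history) {struct s} : R :=
  match s with
  | O => z
  | S s' => sumL (fun wa => fst wa *
       (if Nat.ltb k (act_pull (snd wa)) then g s (snd wa)
        else c (snd wa) + mu (act_pull (snd wa)) * Ev mu k c g z s' (h ++ [(snd wa, true)])
             + (1 - mu (act_pull (snd wa))) * Ev mu k c g z s' (h ++ [(snd wa, false)])))
       (A T h)
  end.

Lemma Ev_lin mu k c1 c2 g1 g2 z1 z2 s h :
  Ev mu k (fun a => c1 a + c2 a) (fun s a => g1 s a + g2 s a) (z1 + z2) s h
  = Ev mu k c1 g1 z1 s h + Ev mu k c2 g2 z2 s h.
Proof.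
  revert h; induction s as [|s IH]; intros h; simpl; [reflexivity|].
  rewrite <- sumL_plus. apply sumL_ext. intros wa _.
  destruct (Nat.ltb k (act_pull (snd wa))); [ring|]. rewrite !IH. ring.
Qed.

Lemma Ev_scal mu k r c g z s h :
  Ev mu k (fun a => r * c a) (fun s a => r * g s a) (r * z) s h = r * Ev mu k c g z s h.
Proof.
  revert h; induction s as [|s IH]; intros h; simpl; [reflexivity|].
  rewrite <- sumL_scal. apply sumL_ext. intros wa _.
  destruct (Nat.ltb k (act_pull (snd wa))); [ring|]. rewrite !IH. ring.
Qed.

Lemma Ev_ext mu mu' k c g z s h : (forall i, (i <= k)%nat -> mu i = mu' i) ->
  Ev mu k c g z s h = Ev mu' k c g z s h.
Proof.
  intros Hm. revert h; induction s as [|s IH]; intros h; simpl; [reflexivity|].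
  apply sumL_ext. intros wa _.
  destruct (Nat.ltb k (act_pull (snd wa))) eqn:E; [reflexivity|].
  apply Nat.ltb_ge in E. rewrite Hm by exact E. rewrite !IH. reflexivity.
Qed.

Variables n m : nat.
Hypothesis HA : is_streaming_alg n m A.

Definition headok (mu : nat -> R) k := forall i, (i <= k)%nat -> 0 <= mu i <= 1.

Lemma Ev_mono mu k c1 c2 g1 g2 z1 z2 s h : headok mu k ->
  (forall a st, valid_action n m st a -> c1 a <= c2 a) ->
  (forall s a st, valid_action n m st a -> g1 s a <= g2 s a) -> z1 <= z2 ->
  hist_valid n m h ->
  Ev mu k c1 g1 z1 s h <= Ev mu k c2 g2 z2 s h.
Proof.
  intros Hm Hc Hg Hz. revert h; induction s as [|s IH]; intros h Hh; simpl; [lra|].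
  destruct (HA T h Hh) as [[Hw _] Hv].
  apply sumL_le. intros [w a] Hin. simpl.
  assert (0 <= w) by (eapply Hw; eauto).
  apply Rmult_le_compat_l; auto.
  destruct (Nat.ltb k (act_pull a)) eqn:E; [eapply Hg; eapply Hv; eauto|].
  apply Nat.ltb_ge in E. destruct (Hm _ E) as [Hm0 Hm1].
  assert (Hr1 := IH (h ++ [(a, true)]) (hv_snoc _ _ _ _ _ Hh (Hv _ _ Hin))).
  assert (Hr2 := IH (h ++ [(a, false)]) (hv_snoc _ _ _ _ _ Hh (Hv _ _ Hin))).
  specialize (Hc a _ (Hv _ _ Hin)).
  assert (mu (act_pull a) * Ev mu k c1 g1 z1 s (h ++ [(a, true)]) <=
          mu (act_pull a) * Ev mu k c2 g2 z2 s (h ++ [(a, true)])) by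
    (apply Rmult_le_compat_l; lra).
  assert ((1 - mu (act_pull a)) * Ev mu k c1 g1 z1 s (h ++ [(a, false)]) <=
          (1 - mu (act_pull a)) * Ev mu k c2 g2 z2 s (h ++ [(a, false)])) by
    (apply Rmult_le_compat_l; lra).
  lra.
Qed.

Lemma Ev_const mu k r s h : hist_valid n m h ->
  Ev mu k (fun _ => 0) (fun _ _ => r) r s h = r.
Proof.
  revert h; induction s as [|s IH]; intros h Hh; simpl; [reflexivity|].
  destruct (HA T h Hh) as [[Hw Hs] Hv].
  transitivity (sumL (fun wa => fst wa * r) (A T h)); [|apply sumL_w; exact Hs].
  apply sumL_ext. intros [w a] Hin. simpl.
  destruct (Nat.ltb k (act_pull a)); [reflexivity|].
  rewrite !IH by (apply hv_snoc; auto; eapply Hv; eauto). ring.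
Qed.

End EvSec.


Section Reg.
Variable A : algorithm.
Variable T : nat.
Variables n m : nat.
Hypothesis HA : is_streaming_alg n m A.
Variable mu : nat -> R.
Variable ms : R.
Hypothesis Hmu : forall i, 0 <= mu i <= 1 /\ mu i <= ms.

Lemma er_S s h : exp_regret_from A T mu ms (S s) h =
  sumL (fun wa => fst wa * ((ms - mu (act_pull (snd wa)))
     + mu (act_pull (snd wa)) * exp_regret_from A T mu ms s (h ++ [(snd wa, true)])
     + (1 - mu (act_pull (snd wa))) * exp_regret_from A T mu ms s (h ++ [(snd wa, false)])))
   (A T h).
Proof. reflexivity. Qed.

Lemma er_nonneg s h : hist_valid n m h -> 0 <= exp_regret_from A T mu ms s h.
Proof.
  revert h; induction s as [|s IH]; intros h Hh; [simpl; lra|].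
  rewrite er_S. destruct (HA T h Hh) as [[Hw _] Hv].
  transitivity (sumL (fun _ => 0) (A T h)).
  { clear. induction (A T h); simpl; lra. }
  apply sumL_le. intros [w a] Hin. simpl.
  assert (0 <= w) by (eapply Hw; eauto).
  destruct (Hmu (act_pull a)).
  assert (Hr1 := IH (h ++ [(a, true)]) (hv_snoc _ _ _ _ _ Hh (Hv _ _ Hin))).
  assert (Hr2 := IH (h ++ [(a, false)]) (hv_snoc _ _ _ _ _ Hh (Hv _ _ Hin))).
  apply Rmult_le_pos; auto.
  assert (0 <= mu (act_pull a) * exp_regret_from A T mu ms s (h ++ [(a, true)])) by
    (apply Rmult_le_pos; lra).
  assert (0 <= (1 - mu (act_pull a)) * exp_regret_from A T mu ms s (h ++ [(a, false)])) by
    (apply Rmult_le_pos; lra).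
  lra.
Qed.

Lemma er_step_ge (h : history) (G : R * action -> R) s :
  hist_valid n m h ->
  (forall w a, In (w, a) (A T h) -> 0 <= w -> G (w, a) <= w * ((ms - mu (act_pull a))
     + mu (act_pull a) * exp_regret_from A T mu ms s (h ++ [(a, true)])
     + (1 - mu (act_pull a)) * exp_regret_from A T mu ms s (h ++ [(a, false)]))) ->
  sumL G (A T h) <= exp_regret_from A T mu ms (S s) h.
Proof.
  intros Hh HF. rewrite er_S. destruct (HA T h Hh) as [[Hw _] Hv].
  apply sumL_le. intros [w a] Hin. simpl.
  apply HF; auto. eapply Hw; eauto.
Qed.

Lemma mulw (w x y : R) : 0 <= w -> x <= y -> w * x <= w * y.
Proof. intros; apply Rmult_le_compat_l; auto. Qed.

Variable j : nat.
Variable e : R.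
Hypothesis He : 0 <= e.
Hypothesis Hgap : forall i, i <> j -> e <= ms - mu i.

Lemma er_lost s h : hist_valid n m h -> ~ In j (fst (state_of h)) ->
  (j < snd (state_of h))%nat -> e * INR s <= exp_regret_from A T mu ms s h.
Proof.
  revert h; induction s as [|s IH]; intros h Hh Hj1 Hj2; [simpl; lra|].
  destruct (HA T h Hh) as [[Hw Hs] Hv].
  rewrite <- (sumL_w _ (e * INR (S s)) Hs).
  apply er_step_ge; auto. intros w a Hin Hw0. simpl. apply mulw; auto.
  assert (Hva := Hv _ _ Hin). assert (Hva0 := Hva). destruct (state_of h) as [M p] eqn:EM. simpl in *.
  destruct Hva as (Hp & _ & _ & Hmem & Hpull).
  assert (Hnj : ~ In j (act_mem a)).
  { intros Hin2. destruct (Hmem _ Hin2) as [X|X]; [tauto|lia]. }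
  assert (Hpj : act_pull a <> j). { intros E; subst; tauto. }
  assert (Hr1 : e * INR s <= exp_regret_from A T mu ms s (h ++ [(a, true)])).
  { apply IH; [apply hv_snoc; [auto| rewrite EM; exact Hva0] | rewrite state_of_snoc; simpl; auto | rewrite state_of_snoc; simpl; lia]. }
  assert (Hr2 : e * INR s <= exp_regret_from A T mu ms s (h ++ [(a, false)])).
  { apply IH; [apply hv_snoc; [auto| rewrite EM; exact Hva0] | rewrite state_of_snoc; simpl; auto | rewrite state_of_snoc; simpl; lia]. }
  specialize (Hgap _ Hpj). destruct (Hmu (act_pull a)).
  change (match s with 0%nat => 1 | S _ => INR s + 1 end) with (INR (S s)). rewrite S_INR.
  assert (mu (act_pull a) * (e * INR s) <= mu (act_pull a) * exp_regret_from A T mu ms s (h ++ [(a, true)])) by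
    (apply Rmult_le_compat_l; lra).
  assert ((1 - mu (act_pull a)) * (e * INR s) <= (1 - mu (act_pull a)) * exp_regret_from A T mu ms s (h ++ [(a, false)])) by
    (apply Rmult_le_compat_l; lra).
  nra.
Qed.

Definition indE (k : nat) (s : nat) (a : action) : R :=
  if in_dec Nat.eq_dec j (act_mem a) then 0 else if Nat.leb T (2 * s) then 1 else 0.

Lemma er_unprimed k s h : (j <= k)%nat -> hist_valid n m h ->
  Ev A T mu k (fun _ => 0) (fun s a => e * (INR T / 2) * indE k s a) 0 s h
  <= exp_regret_from A T mu ms s h.
Proof.
  intros Hjk. revert h; induction s as [|s IH]; intros h Hh; [simpl; lra|].
  simpl Ev. apply er_step_ge; auto. intros w a Hin Hw0. simpl. apply mulw; auto.
  destruct (HA T h Hh) as [[Hw Hs] Hv].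
  assert (Hva := Hv _ _ Hin).
  assert (Hh1 := hv_snoc _ _ _ _ (true) Hh Hva).
  assert (Hh2 := hv_snoc _ _ _ _ (false) Hh Hva).
  assert (Hinv := hist_inv _ _ _ Hh).
  destruct (Hmu (act_pull a)).
  assert (N1 := er_nonneg s _ Hh1). assert (N2 := er_nonneg s _ Hh2).
  assert (0 <= mu (act_pull a) * exp_regret_from A T mu ms s (h ++ [(a, true)])) by
    (apply Rmult_le_pos; lra).
  assert (0 <= (1 - mu (act_pull a)) * exp_regret_from A T mu ms s (h ++ [(a, false)])) by
    (apply Rmult_le_pos; lra).
  destruct (Nat.ltb k (act_pull a)) eqn:Ek.
  - apply Nat.ltb_lt in Ek. unfold indE.
    destruct (in_dec Nat.eq_dec j (act_mem a)) as [Hi|Hni].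
    { rewrite Rmult_0_r. lra. }
    destruct (Nat.leb T (2 * S s)) eqn:ET; [|rewrite Rmult_0_r; lra].
    apply Nat.leb_le in ET.
    destruct (state_of h) as [M p] eqn:EM. simpl in Hinv.
    destruct Hva as (Hp & _ & _ & Hmem & Hpull).
    assert (Hpp : (act_pull a < act_ptr a)%nat).
    { destruct (Hmem _ Hpull) as [X|X]; [specialize (Hinv _ X); lia| lia]. }
    assert (Hr1 : e * INR s <= exp_regret_from A T mu ms s (h ++ [(a, true)])).
    { apply er_lost; auto; rewrite state_of_snoc; simpl; auto; lia. }
    assert (Hr2 : e * INR s <= exp_regret_from A T mu ms s (h ++ [(a, false)])).
    { apply er_lost; auto; rewrite state_of_snoc; simpl; auto; lia. }
    assert (Hg := Hgap (act_pull a) ltac:(lia)).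
    assert (HT : INR T <= INR (2 * S s)) by (apply le_INR; lia).
    rewrite mult_INR in HT. replace (INR 2) with 2 in HT by (simpl; ring). rewrite S_INR in HT.
    assert (mu (act_pull a) * (e * INR s) <= mu (act_pull a) * exp_regret_from A T mu ms s (h ++ [(a, true)])) by
      (apply Rmult_le_compat_l; lra).
    assert ((1 - mu (act_pull a)) * (e * INR s) <= (1 - mu (act_pull a)) * exp_regret_from A T mu ms s (h ++ [(a, false)])) by
      (apply Rmult_le_compat_l; lra).
    assert (e*(INR T/2) <= e*(INR s + 1)) by (apply Rmult_le_compat_l; lra).  lra.
  - assert (mu (act_pull a) * Ev A T mu k (fun _ => 0) (fun s a => e * (INR T / 2) * indE k s a) 0 s (h ++ [(a, true)])
       <= mu (act_pull a) * exp_regret_from A T mu ms s (h ++ [(a, true)])) by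
      (apply Rmult_le_compat_l; [lra| apply IH; auto]).
    assert ((1 - mu (act_pull a)) * Ev A T mu k (fun _ => 0) (fun s a => e * (INR T / 2) * indE k s a) 0 s (h ++ [(a, false)])
       <= (1 - mu (act_pull a)) * exp_regret_from A T mu ms s (h ++ [(a, false)])) by
      (apply Rmult_le_compat_l; [lra| apply IH; auto]).
    assert (0 <= ms - mu (act_pull a)) by lra. lra.
Qed.

End Reg.

Lemma er_primed A T n m mu ms k gam s h : is_streaming_alg n m A ->
  (forall i, 0 <= mu i <= 1 /\ mu i <= ms) ->
  (forall i, (i <= k)%nat -> gam <= ms - mu i) -> hist_valid n m h ->
  Ev A T mu k (fun _ => gam) (fun _ _ => 0) 0 s h <= exp_regret_from A T mu ms s h.
Proof.
  intros HA Hmu Hg. revert h; induction s as [|s IH]; intros h Hh; [simpl; lra|].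
  simpl Ev. apply er_step_ge with (n := n) (m := m); auto. intros w a Hin Hw0. simpl. apply mulw; auto.
  destruct (HA T h Hh) as [[Hw Hs] Hv].
  assert (Hva := Hv _ _ Hin).
  assert (Hh1 := hv_snoc _ _ _ _ (true) Hh Hva).
  assert (Hh2 := hv_snoc _ _ _ _ (false) Hh Hva).
  destruct (Hmu (act_pull a)).
  assert (N1 := er_nonneg A T n m HA mu ms Hmu s _ Hh1).
  assert (N2 := er_nonneg A T n m HA mu ms Hmu s _ Hh2).
  assert (0 <= mu (act_pull a) * exp_regret_from A T mu ms s (h ++ [(a, true)])) by
    (apply Rmult_le_pos; lra).
  assert (0 <= (1 - mu (act_pull a)) * exp_regret_from A T mu ms s (h ++ [(a, false)])) by
    (apply Rmult_le_pos; lra).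
  destruct (Nat.ltb k (act_pull a)) eqn:Ek; [lra|].
  apply Nat.ltb_ge in Ek. specialize (Hg _ Ek).
  assert (mu (act_pull a) * Ev A T mu k (fun _ => gam) (fun _ _ => 0) 0 s (h ++ [(a, true)])
       <= mu (act_pull a) * exp_regret_from A T mu ms s (h ++ [(a, true)])) by
      (apply Rmult_le_compat_l; [lra| apply IH; auto]).
  assert ((1 - mu (act_pull a)) * Ev A T mu k (fun _ => gam) (fun _ _ => 0) 0 s (h ++ [(a, false)])
       <= (1 - mu (act_pull a)) * exp_regret_from A T mu ms s (h ++ [(a, false)])) by
      (apply Rmult_le_compat_l; [lra| apply IH; auto]).
  lra.
Qed.


Lemma ln_le' x y : 0 < x -> x <= y -> ln x <= ln y.
Proof.
  intros Hx [H|H]; [left; apply ln_increasing; auto| subst; lra].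
Qed.

Lemma ln_sub1 z : 0 < z -> ln z <= z - 1.
Proof.
  intros Hz. rewrite <- (ln_exp (z - 1)). apply ln_le'; auto.
  generalize (exp_ineq1_le (z - 1)). lra.
Qed.

Lemma ln_div' x y : 0 < x -> 0 < y -> ln (x / y) = ln x - ln y.
Proof.
  intros. unfold Rdiv. assert (0 < / y) by (apply Rinv_0_lt_compat; auto).
  rewrite ln_mult by auto. rewrite ln_Rinv by auto. ring.
Qed.

Lemma ln_sqrt' x : 0 < x -> ln (sqrt x) = ln x / 2.
Proof.
  intros Hx. assert (H := sqrt_lt_R0 x Hx).
  assert (ln x = ln (sqrt x * sqrt x)) by (rewrite sqrt_sqrt; lra).
  rewrite ln_mult in H0; auto. lra.
Qed.

Lemma pw_logsum X Y Aa Bb : 0 < X -> 0 < Y -> 0 < Aa -> 0 < Bb ->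
  X * (ln Aa - ln Bb) + X - Aa / Bb * Y <= X * (ln X - ln Y).
Proof.
  intros. set (z := Aa * Y / (Bb * X)).
  assert (Hz : 0 < z) by (unfold z; apply Rdiv_lt_0_compat; apply Rmult_lt_0_compat; auto).
  assert (Hl := ln_sub1 z Hz).
  assert (ln z = ln Aa + ln Y - ln Bb - ln X).
  { unfold z. rewrite ln_div', !ln_mult; auto; try ring; apply Rmult_lt_0_compat; auto. }
  assert (X * z = Aa / Bb * Y) by (unfold z; field; lra).
  assert (X * ln z <= X * (z - 1)) by (apply Rmult_le_compat_l; lra).
  nra.
Qed.

Definition kl (x y : R) : R := x * (ln x - ln y) + (1 - x) * (ln (1 - x) - ln (1 - y)).

Definition sw (l : Defs.dist) (X : action -> R) := sumL (fun wa => fst wa * X (snd wa)) l.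

Lemma logsum_list (l : Defs.dist) X Y :
  (forall w a, In (w, a) l -> 0 <= w) ->
  (forall w a, In (w, a) l -> 0 < X a /\ 0 < Y a) ->
  0 < sw l X -> 0 < sw l Y ->
  sw l X * (ln (sw l X) - ln (sw l Y)) <= sumL (fun wa => fst wa * (X (snd wa) * (ln (X (snd wa)) - ln (Y (snd wa))))) l.
Proof.
  intros Hw HXY HA HB.
  set (Aa := sw l X). set (Bb := sw l Y).
  transitivity (sumL (fun wa => fst wa * (X (snd wa) * (ln Aa - ln Bb) + X (snd wa) - Aa / Bb * Y (snd wa))) l).
  - right. transitivity (sumL (fun wa => (ln Aa - ln Bb) * (fst wa * X (snd wa)) + (fst wa * X (snd wa))
        + (- (Aa / Bb)) * (fst wa * Y (snd wa))) l).
    + rewrite !sumL_plus, !sumL_scal. fold (sw l X) (sw l Y). fold Aa Bb. field. unfold Bb; lra.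
    + apply sumL_ext. intros. ring.
  - apply sumL_le. intros [w a] Hin. simpl. apply Rmult_le_compat_l; [eapply Hw; eauto|].
    destruct (HXY _ _ Hin). apply pw_logsum; auto.
Qed.

Lemma sw_const l c : fold_right (fun wa acc => fst wa + acc) 0 l = 1 -> sw l (fun _ => c) = c.
Proof. intros. unfold sw. apply sumL_w; auto. Qed.

Lemma sw_lin l a b X Y : sw l (fun x => a * X x + b * Y x) = a * sw l X + b * sw l Y.
Proof.
  unfold sw. rewrite <- !sumL_scal, <- sumL_plus. apply sumL_ext. intros. ring.
Qed.

Lemma sw_range (l : Defs.dist) X lo hi : (forall w a, In (w, a) l -> 0 <= w) ->
  fold_right (fun wa acc => fst wa + acc) 0 l = 1 ->
  (forall w a, In (w, a) l -> lo <= X a <= hi) -> lo <= sw l X <= hi.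
Proof.
  intros Hw Hs HX. rewrite <- (sw_const l lo Hs) at 1. rewrite <- (sw_const l hi Hs).
  split; apply sumL_le; intros [w a] Hin; simpl; apply Rmult_le_compat_l;
    try (eapply Hw; eauto); destruct (HX _ _ Hin); lra.
Qed.

Lemma kl_mix (l : Defs.dist) X Y eta :
  (forall w a, In (w, a) l -> 0 <= w) ->
  fold_right (fun wa acc => fst wa + acc) 0 l = 1 -> 0 < eta ->
  (forall w a, In (w, a) l -> eta <= X a <= 1 - eta /\ eta <= Y a <= 1 - eta) ->
  kl (sw l X) (sw l Y) <= sumL (fun wa => fst wa * kl (X (snd wa)) (Y (snd wa))) l.
Proof.
  intros Hw Hs He HXY.
  assert (RX : eta <= sw l X <= 1 - eta) by (apply sw_range; auto; intros; apply HXY with w; auto).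
  assert (RY : eta <= sw l Y <= 1 - eta) by (apply sw_range; auto; intros; apply HXY with w; auto).
  assert (L1 := logsum_list l X Y Hw ltac:(intros w a Hin; destruct (HXY _ _ Hin); lra) ltac:(lra) ltac:(lra)).
  assert (E1 : sw l (fun a => 1 - X a) = 1 - sw l X).
  { replace (fun a => 1 - X a) with (fun a => 1 * (fun _ => 1) a + (-1) * X a)
      by (apply functional_extensionality; intros; ring). rewrite sw_lin, sw_const; auto. ring. }
  assert (E2 : sw l (fun a => 1 - Y a) = 1 - sw l Y).
  { replace (fun a => 1 - Y a) with (fun a => 1 * (fun _ => 1) a + (-1) * Y a)
      by (apply functional_extensionality; intros; ring). rewrite sw_lin, sw_const; auto. ring. }
  assert (L2 := logsum_list l (fun a => 1 - X a) (fun a => 1 - Y a) Hw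
     ltac:(intros w a Hin; destruct (HXY _ _ Hin); lra) ltac:(rewrite E1; lra) ltac:(rewrite E2; lra)).
  rewrite E1, E2 in L2. unfold kl. simpl in L2.
  transitivity (sumL (fun wa => fst wa * (X (snd wa) * (ln (X (snd wa)) - ln (Y (snd wa))))) l +
     sumL (fun wa => fst wa * ((1 - X (snd wa)) * (ln (1 - X (snd wa)) - ln (1 - Y (snd wa))))) l).
  - lra.
  - rewrite <- sumL_plus. right. apply sumL_ext. intros. ring.
Qed.

Lemma logsum2 a b c d : 0 < a -> 0 < b -> 0 < c -> 0 < d ->
  (a + c) * (ln (a + c) - ln (b + d)) <= a * (ln a - ln b) + c * (ln c - ln d).
Proof.
  intros Ha Hb Hc Hd. assert (H1 := pw_logsum a b (a + c) (b + d) ltac:(auto) ltac:(auto) ltac:(lra) ltac:(lra)).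
  assert (H2 := pw_logsum c d (a + c) (b + d) ltac:(auto) ltac:(auto) ltac:(lra) ltac:(lra)).
  assert ((a + c) / (b + d) * b + (a + c) / (b + d) * d = a + c) by (field; repeat split; intro; lra).
  lra.
Qed.

Lemma kl_chain q0 q1 x y x' y' :
  0 < q0 < 1 -> 0 < q1 < 1 -> 0 < x < 1 -> 0 < y < 1 -> 0 < x' < 1 -> 0 < y' < 1 ->
  kl (q0 * x + (1 - q0) * x') (q1 * y + (1 - q1) * y')
  <= kl q0 q1 + q0 * kl x y + (1 - q0) * kl x' y'.
Proof.
  intros Q0 Q1 X0 Y0 X1 Y1. unfold kl.
  assert (K1 := logsum2 (q0 * x) (q1 * y) ((1 - q0) * x') ((1 - q1) * y')
     ltac:(nra) ltac:(nra) ltac:(nra) ltac:(nra)).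
  assert (K2 := logsum2 (q0 * (1 - x)) (q1 * (1 - y)) ((1 - q0) * (1 - x')) ((1 - q1) * (1 - y'))
     ltac:(nra) ltac:(nra) ltac:(nra) ltac:(nra)).
  replace (q0 * (1 - x) + (1 - q0) * (1 - x')) with (1 - (q0 * x + (1 - q0) * x')) in K2 by ring.
  replace (q1 * (1 - y) + (1 - q1) * (1 - y')) with (1 - (q1 * y + (1 - q1) * y')) in K2 by ring.
  rewrite !ln_mult in K1, K2 by nra.
  lra.
Qed.

Lemma kl_same x : kl x x = 0.
Proof. unfold kl. ring. Qed.

Lemma kl_hell f p : 0 < f < 1 -> 0 < p < 1 -> (sqrt f - sqrt p) ^ 2 <= kl f p.
Proof.
  intros Hf Hp.
  assert (Sf := sqrt_lt_R0 f ltac:(lra)). assert (Sp := sqrt_lt_R0 p ltac:(lra)).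
  assert (Sf' := sqrt_lt_R0 (1 - f) ltac:(lra)). assert (Sp' := sqrt_lt_R0 (1 - p) ltac:(lra)).
  assert (Qf := sqrt_sqrt f ltac:(lra)). assert (Qp := sqrt_sqrt p ltac:(lra)).
  assert (Qf' := sqrt_sqrt (1 - f) ltac:(lra)). assert (Qp' := sqrt_sqrt (1 - p) ltac:(lra)).
  assert (L1 := ln_sub1 (sqrt p / sqrt f) ltac:(apply Rdiv_lt_0_compat; auto)).
  assert (L2 := ln_sub1 (sqrt (1 - p) / sqrt (1 - f)) ltac:(apply Rdiv_lt_0_compat; auto)).
  rewrite ln_div', !ln_sqrt' in L1, L2 by lra.
  assert (f * (ln f - ln p) >= 2 * f - 2 * sqrt f * sqrt p).
  { assert (f * (ln p / 2 - ln f / 2) <= f * (sqrt p / sqrt f - 1)) by (apply Rmult_le_compat_l; lra).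
    assert (f * (sqrt p / sqrt f) = sqrt f * sqrt p) by (rewrite <- Qf at 1; field; lra). lra. }
  assert ((1 - f) * (ln (1 - f) - ln (1 - p)) >= 2 * (1 - f) - 2 * sqrt (1 - f) * sqrt (1 - p)).
  { assert ((1 - f) * (ln (1 - p) / 2 - ln (1 - f) / 2) <= (1 - f) * (sqrt (1 - p) / sqrt (1 - f) - 1))
      by (apply Rmult_le_compat_l; lra).
    assert ((1 - f) * (sqrt (1 - p) / sqrt (1 - f)) = sqrt (1 - f) * sqrt (1 - p))
      by (rewrite <- Qf' at 1; field; lra). lra. }
  assert (0 <= (sqrt (1 - f) - sqrt (1 - p)) ^ 2) by apply pow2_ge_0. unfold kl. nra.
Qed.

Lemma kl_bern q0 q1 : 0 < q0 < 1 -> 0 < q1 < 1 ->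
  kl q0 q1 <= (q0 - q1) ^ 2 / (q1 * (1 - q1)).
Proof.
  intros. unfold kl.
  assert (L1 := ln_sub1 (q0 / q1) ltac:(apply Rdiv_lt_0_compat; lra)).
  assert (L2 := ln_sub1 ((1 - q0) / (1 - q1)) ltac:(apply Rdiv_lt_0_compat; lra)).
  rewrite ln_div' in L1, L2 by lra.
  assert (q0 * (ln q0 - ln q1) <= q0 * (q0 / q1 - 1)) by (apply Rmult_le_compat_l; lra).
  assert ((1 - q0) * (ln (1 - q0) - ln (1 - q1)) <= (1 - q0) * ((1 - q0) / (1 - q1) - 1))
    by (apply Rmult_le_compat_l; lra).
  assert (q0 * (q0 / q1 - 1) + (1 - q0) * ((1 - q0) / (1 - q1) - 1) = (q0 - q1) ^ 2 / (q1 * (1 - q1)))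
    by (field; repeat split; intro; lra).
  lra.
Qed.


Section S4.
Variable A : algorithm.
Variable T : nat.
Variables n m : nat.
Hypothesis HA : is_streaming_alg n m A.

Lemma Ev_S_sw mu k c g z s h : Ev A T mu k c g z (S s) h =
  sw (A T h) (fun a => if Nat.ltb k (act_pull a) then g (S s) a
        else c a + mu (act_pull a) * Ev A T mu k c g z s (h ++ [(a, true)])
             + (1 - mu (act_pull a)) * Ev A T mu k c g z s (h ++ [(a, false)])).
Proof. reflexivity. Qed.

Lemma Ev_congr_le mu k c c' g g' z z' s h : (forall a, c a = c' a) ->
  (forall s' a, (s' <= s)%nat -> (k < act_pull a)%nat -> g s' a = g' s' a) -> z = z' ->
  Ev A T mu k c g z s h = Ev A T mu k c' g' z' s h.
Proof.
  intros Hc. revert h; induction s as [|s IH]; intros h Hg Hz; simpl; auto.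
  apply sumL_ext. intros wa _. rewrite Hc.
  destruct (Nat.ltb k (act_pull (snd wa))) eqn:E.
  - apply Nat.ltb_lt in E. rewrite Hg by lia. reflexivity.
  - rewrite !IH; auto.
Qed.

Lemma Ev_range mu k g z lo hi s h : headok mu k ->
  (forall s a, lo <= g s a <= hi) -> lo <= z <= hi -> hist_valid n m h ->
  lo <= Ev A T mu k (fun _ => 0) g z s h <= hi.
Proof.
  intros Hm Hg Hz Hh. split.
  - rewrite <- (Ev_const A T n m HA mu k lo s h Hh) at 1.
    apply Ev_mono with (n := n) (m := m); auto; intros; try lra; apply Hg.
  - rewrite <- (Ev_const A T n m HA mu k hi s h Hh).
    apply Ev_mono with (n := n) (m := m); auto; intros; try lra; apply Hg.
Qed.

Lemma kl_nonneg x y : 0 < x < 1 -> 0 < y < 1 -> 0 <= kl x y.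
Proof. intros. eapply Rle_trans; [|apply kl_hell; auto]. apply pow2_ge_0. Qed.

Lemma Ev_count mu k s h : hist_valid n m h ->
  Ev A T mu k (fun _ => 1) (fun _ _ => 0) 0 s h =
  Ev A T mu k (fun _ => 0) (fun s' _ => INR (s - s')) (INR s) s h.
Proof.
  revert h; induction s as [|s IH]; intros h Hh; [reflexivity|].
  destruct (HA T h Hh) as [[Hw Hs] Hv].
  rewrite !Ev_S_sw. unfold sw. apply sumL_ext. intros [w a] Hin. simpl snd.
  destruct (Nat.ltb k (act_pull a)).
  { rewrite Nat.sub_diag. simpl. ring. }
  assert (E : forall b, hist_valid n m (h ++ [(a, b)]) ->
    Ev A T mu k (fun _ => 0) (fun s' _ => INR (S s - s')) (INR (S s)) s (h ++ [(a, b)])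
    = Ev A T mu k (fun _ => 1) (fun _ _ => 0) 0 s (h ++ [(a, b)]) + 1).
  { intros b Hb.
    rewrite (Ev_congr_le mu k _ (fun a => 0 + 0) _ (fun s' a => INR (s - s') + 1) _ (INR s + 1)).
    - rewrite Ev_lin, IH, Ev_const with (n := n) (m := m); auto.
    - intros; ring.
    - intros s' a0 Hs' _. replace (S s - s')%nat with (S (s - s')) by lia. apply S_INR.
    - apply S_INR. }
  rewrite !E by (apply hv_snoc; auto; eapply Hv; eauto). ring.
Qed.

Lemma Ev_markov mu k h : hist_valid n m h -> headok mu k ->
  INR T / 2 * Ev A T mu k (fun _ => 0) (fun s' _ => if Nat.leb T (2 * s') then 0 else 1) 1 T h
  <= Ev A T mu k (fun _ => 1) (fun _ _ => 0) 0 T h.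
Proof.
  intros Hh Hm. rewrite Ev_count by auto.
  rewrite <- Ev_scal. apply Ev_mono with (n := n) (m := m); auto.
  - intros; lra.
  - intros s' a st _. destruct (Nat.leb T (2 * s')) eqn:E.
    + rewrite Rmult_0_r. apply pos_INR.
    + apply Nat.leb_gt in E. rewrite minus_INR by lia.
      assert (H2 : INR (2 * s') < INR T) by (apply lt_INR; lia).
      rewrite mult_INR in H2. replace (INR 2) with 2 in H2 by (simpl; ring). lra.
  - assert (0 <= INR T) by apply pos_INR. lra.
Qed.

Section KL.
Variables mu0 mu1 : nat -> R.
Variables k j : nat.
Hypothesis Hagree : forall i, i <> j -> mu0 i = mu1 i.
Hypothesis Hhead : forall i, (i <= k)%nat -> 0 < mu0 i < 1 /\ 0 < mu1 i < 1.
Variable eta : R.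
Hypothesis Heta : 0 < eta.
Variable g : nat -> action -> R.
Variable z : R.
Hypothesis Hg : forall s a, eta <= g s a <= 1 - eta.
Hypothesis Hz : eta <= z <= 1 - eta.

Definition Npull := fun a => if Nat.eqb (act_pull a) j then 1 else 0.

Lemma Ev_kl s h : hist_valid n m h ->
  kl (Ev A T mu0 k (fun _ => 0) g z s h) (Ev A T mu1 k (fun _ => 0) g z s h)
  <= kl (mu0 j) (mu1 j) * Ev A T mu0 k Npull (fun _ _ => 0) 0 s h.
Proof.
  assert (H0 : headok mu0 k) by (intros i Hi; destruct (Hhead i Hi); lra).
  assert (H1 : headok mu1 k) by (intros i Hi; destruct (Hhead i Hi); lra).
  revert h; induction s as [|s IH]; intros h Hh.
  { simpl. rewrite kl_same. lra. }
  destruct (HA T h Hh) as [[Hw Hs] Hv].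
  rewrite !Ev_S_sw.
  assert (Rg : forall mu, headok mu k -> forall a b, In (b, a) (A T h) ->
     eta <= Ev A T mu k (fun _ => 0) g z s (h ++ [(a, true)]) <= 1 - eta /\
     eta <= Ev A T mu k (fun _ => 0) g z s (h ++ [(a, false)]) <= 1 - eta).
  { intros mu Hmu a b Hin. split; apply Ev_range; auto; apply hv_snoc; auto; eapply Hv; eauto. }
  eapply Rle_trans.
  { apply kl_mix with (eta := eta); auto. intros w a Hin.
    destruct (Nat.ltb k (act_pull a)) eqn:E; [split; apply Hg|].
    apply Nat.ltb_ge in E. destruct (Hhead _ E).
    destruct (Rg mu0 H0 a w Hin). destruct (Rg mu1 H1 a w Hin).
    split; nra. }
  unfold sw. rewrite <- sumL_scal. apply sumL_le. intros [w a] Hin. simpl.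
  rewrite <- Rmult_assoc, (Rmult_comm _ w), Rmult_assoc.
  apply Rmult_le_compat_l; [eapply Hw; eauto|].
  destruct (Nat.ltb k (act_pull a)) eqn:E.
  { rewrite kl_same. rewrite Rmult_0_r. lra. }
  apply Nat.ltb_ge in E. destruct (Hhead _ E) as [Q0 Q1].
  destruct (Rg mu0 H0 a w Hin) as [R0T R0F]. destruct (Rg mu1 H1 a w Hin) as [R1T R1F].
  assert (HvT : hist_valid n m (h ++ [(a, true)])) by (apply hv_snoc; auto; eapply Hv; eauto).
  assert (HvF : hist_valid n m (h ++ [(a, false)])) by (apply hv_snoc; auto; eapply Hv; eauto).
  assert (IT := IH _ HvT). assert (IF := IH _ HvF).
  set (c := kl (mu0 j) (mu1 j)) in *.
  set (E0T := Ev A T mu0 k (fun _ => 0) g z s (h ++ [(a, true)])) in *.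
  set (E0F := Ev A T mu0 k (fun _ => 0) g z s (h ++ [(a, false)])) in *.
  set (E1T := Ev A T mu1 k (fun _ => 0) g z s (h ++ [(a, true)])) in *.
  set (E1F := Ev A T mu1 k (fun _ => 0) g z s (h ++ [(a, false)])) in *.
  set (NT := Ev A T mu0 k Npull (fun _ _ => 0) 0 s (h ++ [(a, true)])) in *.
  set (NF := Ev A T mu0 k Npull (fun _ _ => 0) 0 s (h ++ [(a, false)])) in *.
  rewrite !Rplus_0_l.
  unfold Npull. destruct (Nat.eqb (act_pull a) j) eqn:Ej.
  - apply Nat.eqb_eq in Ej. rewrite Ej in *.
    eapply Rle_trans; [apply kl_chain; lra|]. fold c.
    assert (mu0 j * kl E0T E1T <= mu0 j * (c * NT)) by (apply Rmult_le_compat_l; lra).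
    assert ((1 - mu0 j) * kl E0F E1F <= (1 - mu0 j) * (c * NF)) by (apply Rmult_le_compat_l; lra).
    lra.
  - apply Nat.eqb_neq in Ej. rewrite <- (Hagree _ Ej).
    eapply Rle_trans; [apply kl_chain; lra|]. rewrite kl_same.
    assert (mu0 (act_pull a) * kl E0T E1T <= mu0 (act_pull a) * (c * NT)) by (apply Rmult_le_compat_l; lra).
    assert ((1 - mu0 (act_pull a)) * kl E0F E1F <= (1 - mu0 (act_pull a)) * (c * NF)) by (apply Rmult_le_compat_l; lra).
    lra.
Qed.
End KL.
End S4.


Definition sumj (l : list nat) (F : nat -> R) : R := fold_right (fun j acc => F j + acc) 0 l.

Lemma sumj_ext l F G : (forall x, In x l -> F x = G x) -> sumj l F = sumj l G.
Proof. induction l; simpl; intros; auto. rewrite H, IHl; auto. Qed.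

Lemma sumj_le l F G : (forall x, In x l -> F x <= G x) -> sumj l F <= sumj l G.
Proof.
  induction l; simpl; intros; [lra|].
  assert (F a <= G a) by auto. assert (sumj l F <= sumj l G) by auto. lra.
Qed.

Lemma sumj_plus l F G : sumj l (fun x => F x + G x) = sumj l F + sumj l G.
Proof. induction l; simpl; [lra|]. rewrite IHl. ring. Qed.

Lemma sumj_exists l F c : c * INR (length l) < sumj l F -> exists x, In x l /\ c < F x.
Proof.
  induction l as [|a l IH]; intros H.
  - simpl in H. lra.
  - assert (E : INR (length (a :: l)) = INR (length l) + 1) by (rewrite <- S_INR; reflexivity).
    change (sumj (a :: l) F) with (F a + sumj l F) in H. rewrite E in H.
    destruct (Rlt_le_dec c (F a)) as [Hc|Hc]; [exists a; simpl; auto|].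
    destruct IH as [x [Hx Hx']]; [lra|exists x; simpl; auto].
Qed.

Section S5.
Variable A : algorithm.
Variable T : nat.
Variables n m : nat.
Hypothesis HA : is_streaming_alg n m A.

Lemma Ev_sum mu k (l : list nat) C G Z s h : hist_valid n m h ->
  Ev A T mu k (fun a => sumj l (fun j => C j a)) (fun s a => sumj l (fun j => G j s a)) (sumj l Z) s h
  = sumj l (fun j => Ev A T mu k (C j) (G j) (Z j) s h).
Proof.
  intros Hh. induction l as [|j l IH]; simpl.
  - apply Ev_const with (n := n) (m := m); auto.
  - rewrite Ev_lin, IH. reflexivity.
Qed.
End S5.

Lemma ind_sum (l L : list nat) : NoDup l ->
  INR (length l) - INR (length L) <= sumj l (fun j => if in_dec Nat.eq_dec j L then 0 else 1).
Proof.
  revert L. induction l as [|j l IH]; intros L Hnd.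
  - simpl. assert (0 <= INR (length L)) by apply pos_INR. lra.
  - inversion Hnd as [|? ? Hj Hnd']; subst.
    replace (INR (length (j :: l))) with (INR (length l) + 1) by (rewrite <- S_INR; reflexivity).
    change (sumj (j :: l) ?F) with (F j + sumj l F).
    destruct (in_dec Nat.eq_dec j L) as [Hin|Hin].
    + assert (Hl := remove_length_lt Nat.eq_dec L j Hin).
      assert (E : sumj l (fun j0 => if in_dec Nat.eq_dec j0 L then 0 else 1) =
                  sumj l (fun j0 => if in_dec Nat.eq_dec j0 (remove Nat.eq_dec j L) then 0 else 1)).
      { apply sumj_ext. intros x Hx. assert (x <> j) by (intro; subst; tauto).
        destruct (in_dec Nat.eq_dec x L) as [X|X];
        destruct (in_dec Nat.eq_dec x (remove Nat.eq_dec j L)) as [Y|Y]; auto.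
        - exfalso. apply Y. apply in_in_remove; auto.
        - exfalso. apply X. apply in_remove in Y. tauto. }
      rewrite E. specialize (IH (remove Nat.eq_dec j L) Hnd').
      assert (Hl' : (S (length (remove Nat.eq_dec j L)) <= length L)%nat) by lia.
      apply le_INR in Hl'. rewrite S_INR in Hl'. cbv beta. destruct (in_dec Nat.eq_dec j L); [|tauto]. lra.
    + specialize (IH L Hnd'). cbv beta. destruct (in_dec Nat.eq_dec j L); [tauto|]. lra.
Qed.

Lemma npull_sum (l : list nat) p : NoDup l ->
  sumj l (fun j => if Nat.eqb p j then 1 else 0) <= 1.
Proof.
  induction l as [|j l IH]; intros Hnd; simpl; [lra|].
  inversion Hnd as [|? ? Hj Hnd']; subst.
  destruct (Nat.eqb p j) eqn:E.
  - apply Nat.eqb_eq in E. subst.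
    assert (sumj l (fun j0 => if Nat.eqb j j0 then 1 else 0) = sumj l (fun _ => 0)).
    { apply sumj_ext. intros x Hx. destruct (Nat.eqb j x) eqn:E2; auto.
      apply Nat.eqb_eq in E2; subst; tauto. }
    rewrite H. clear. assert (sumj l (fun _ => 0) = 0) by (induction l; simpl; lra). lra.
  - specialize (IH Hnd'). lra.
Qed.

Lemma stop_count n m k st a T s : valid_action n m st a -> (k < act_pull a)%nat ->
  (m <= k)%nat ->
  INR (k - m + 1) * (if Nat.leb T (2 * s) then 1 else 0)
  <= sumj (seq 1 k) (fun j => indE T j k s a).
Proof.
  intros Hv Hk Hmk. destruct st as [M p]. destruct Hv as (_ & Hnd & Hlen & _ & Hpull).
  unfold indE.
  destruct (Nat.leb T (2 * s)).
  - assert (E : sumj (seq 1 k) (fun j => if in_dec Nat.eq_dec j (act_mem a) then 0 else 1) =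
                sumj (seq 1 k) (fun j => if in_dec Nat.eq_dec j (remove Nat.eq_dec (act_pull a) (act_mem a)) then 0 else 1)).
    { apply sumj_ext. intros x Hx. apply in_seq in Hx. assert (x <> act_pull a) by lia.
      destruct (in_dec Nat.eq_dec x (act_mem a)) as [X|X];
      destruct (in_dec Nat.eq_dec x (remove Nat.eq_dec (act_pull a) (act_mem a))) as [Y|Y]; auto.
      - exfalso. apply Y. apply in_in_remove; auto.
      - exfalso. apply X. apply in_remove in Y. tauto. }
    assert (E2 : sumj (seq 1 k) (fun j => if in_dec Nat.eq_dec j (act_mem a) then 0 else if true then 1 else 0) =
                 sumj (seq 1 k) (fun j => if in_dec Nat.eq_dec j (act_mem a) then 0 else 1)) by reflexivity.
    apply Rle_trans with (sumj (seq 1 k) (fun j => if in_dec Nat.eq_dec j (act_mem a) then 0 else 1)).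
    2: { right; apply sumj_ext; intros x _; destruct (in_dec Nat.eq_dec x (act_mem a)); reflexivity. }
    rewrite E.
    eapply Rle_trans; [|apply ind_sum; apply seq_NoDup].
    rewrite length_seq.
    assert (Hl := remove_length_lt Nat.eq_dec (act_mem a) (act_pull a) Hpull).
    assert (Hl2 : (length (remove Nat.eq_dec (act_pull a) (act_mem a)) <= m - 1)%nat) by lia.
    apply le_INR in Hl2. rewrite minus_INR in Hl2 by lia.
    rewrite plus_INR, minus_INR by lia. simpl. simpl in Hl2. lra.
  - rewrite Rmult_0_r.
    apply Rle_trans with (sumj (seq 1 k) (fun _ => 0)).
    + clear. induction (seq 1 k); simpl; lra.
    + apply sumj_le. intros. destruct (in_dec Nat.eq_dec x (act_mem a)); lra.
Qed.


Lemma ln_le_inv x y : 0 < x -> 0 < y -> ln x <= ln y -> x <= y.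
Proof.
  intros Hx Hy [H|H]; [left; apply ln_lt_inv; auto| right; apply ln_inv; auto].
Qed.

Lemma Rpower_pos' x y : 0 < Rpower x y.
Proof. unfold Rpower. apply exp_pos. Qed.

Lemma ln16 : ln 16 = 2 * ln 4.
Proof. replace 16 with (4 * 4) by lra. rewrite ln_mult by lra. ring. Qed.

Lemma ln16_pos : 0 < ln 16.
Proof. rewrite <- ln_1. apply ln_increasing; lra. Qed.

Lemma eps_key k T alpha : (0 < k)%nat -> (0 < T)%nat -> 0 <= alpha ->
  (2 + 2 * alpha) * ln (eps k T alpha) = - (alpha + 1) * ln 16 + ln (INR k) - ln (INR T).
Proof.
  intros Hk HT Ha. unfold eps.
  assert (0 < INR k) by (apply lt_0_INR; lia). assert (0 < INR T) by (apply lt_0_INR; lia).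
  rewrite ln_mult by (try apply Rpower_pos'; lra).
  rewrite ln_Rinv by lra. rewrite ln_Rpower. rewrite ln_div' by lra. rewrite ln16.
  field. lra.
Qed.

Lemma eps_pos k T alpha : 0 < eps k T alpha.
Proof. unfold eps. apply Rmult_lt_0_compat; [lra| apply Rpower_pos']. Qed.

Section An.
Variables (alpha : R) (k T : nat).
Hypothesis Ha : 1 <= alpha.
Hypothesis Hk : (0 < k)%nat.
Hypothesis HT : (0 < T)%nat.
Variable e : R.
Hypothesis Hkey : (2 + 2 * alpha) * ln e = - (alpha + 1) * ln 16 + ln (INR k) - ln (INR T).
Hypothesis He : 0 < e.
Hypothesis Hk' : 0 < INR k.
Hypothesis HT' : 0 < INR T.

Lemma front_id : Rpower (INR T) (1 / (alpha + 1)) / Rpower (INR k) (1 + 1 / (alpha + 1))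
  = / (16 * e ^ 2 * INR k).
Proof.
  assert (P1 := Rpower_pos' (INR T) (1 / (alpha + 1))).
  assert (P2 := Rpower_pos' (INR k) (1 + 1 / (alpha + 1))).
  assert (P3 : 0 < e ^ 2) by (apply pow_lt; auto).
  assert (P4 : 0 < 16 * e ^ 2) by lra.
  assert (P5 : 0 < 16 * e ^ 2 * INR k) by nra.
  apply ln_inv.
  - apply Rdiv_lt_0_compat; auto.
  - apply Rinv_0_lt_compat; auto.
  - unfold Rdiv. rewrite ln_mult by (auto; apply Rinv_0_lt_compat; auto).
    rewrite ln_Rinv by auto. rewrite ln_Rinv by auto.
    rewrite !ln_Rpower. rewrite ln_mult by auto. rewrite ln_mult by lra. rewrite ln_pow by auto.
    replace (INR 2) with 2 by (simpl; ring).
    assert (E : ln (INR T) = ln (INR k) - (alpha + 1) * ln 16 - (2 + 2 * alpha) * ln e) by lra.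
    rewrite E. field. lra.
Qed.

Lemma term_unprimed D : e <= D ->
  2 / Rpower 16 (alpha + 1) * Rpower D (1 - 2 * alpha) <= 2 * e ^ 4 * INR T / (INR k * D).
Proof.
  intros HD. assert (HD0 : 0 < D) by lra.
  assert (P1 := Rpower_pos' 16 (alpha + 1)).
  assert (P2 := Rpower_pos' D (1 - 2 * alpha)).
  assert (P3 : 0 < e ^ 4) by (apply pow_lt; auto).
  assert (P4 : 0 < INR k * D) by nra.
  assert (P5 : 0 < 2 * e ^ 4) by lra.
  assert (P6 : 0 < 2 * e ^ 4 * INR T) by nra.
  apply ln_le_inv.
  - apply Rmult_lt_0_compat; auto. apply Rdiv_lt_0_compat; lra.
  - apply Rdiv_lt_0_compat; auto.
  - unfold Rdiv.
    rewrite ln_mult by (try apply Rmult_lt_0_compat; try apply Rinv_0_lt_compat; auto; lra).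
    rewrite ln_mult by (try apply Rinv_0_lt_compat; auto; lra).
    rewrite ln_mult by (try apply Rinv_0_lt_compat; auto; lra).
    rewrite !ln_Rinv by auto.
    rewrite !ln_Rpower. rewrite ln_mult by auto. rewrite ln_mult by lra. rewrite ln_mult by lra.
    rewrite ln_pow by auto.
    replace (INR 4) with 4 by (simpl; ring).
    assert (E : ln (INR T) = ln (INR k) - (alpha + 1) * ln 16 - (2 + 2 * alpha) * ln e) by lra.
    rewrite E.
    assert (ln e <= ln D) by (apply ln_le'; auto).
    nra.
Qed.

End An.

Lemma term_primed alpha g : 1 <= alpha -> / 4 <= g ->
  2 / Rpower 16 (alpha + 1) * Rpower g (1 - 2 * alpha) <= / (128 * g).
Proof.
  intros Ha Hg.
  apply ln_le_inv.
  - apply Rmult_lt_0_compat; [apply Rdiv_lt_0_compat; [lra|apply Rpower_pos']| apply Rpower_pos'].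
  - apply Rinv_0_lt_compat. lra.
  - unfold Rdiv. rewrite !ln_mult; try (apply Rinv_0_lt_compat); try apply Rpower_pos'; try lra.
    rewrite !ln_Rinv by (try apply Rpower_pos'; lra).
    rewrite !ln_Rpower. rewrite ln_mult by lra.
    assert (E : ln 2 + ln 128 = 2 * ln 16).
    { rewrite <- ln_mult by lra. replace (2 * 128) with (16 * 16) by lra. rewrite ln_mult by lra. ring. }
    assert (L : 0 <= ln 16 + 2 * ln g).
    { assert (E2 : ln (16 * (g * g)) = ln 16 + 2 * ln g) by (rewrite !ln_mult by nra; ring).
      rewrite <- E2. rewrite <- ln_1. apply ln_le'; nra. }
    nra.
    apply Rmult_lt_0_compat; [lra|apply Rinv_0_lt_compat, Rpower_pos'].
Qed.

Lemma nat_above X : exists N : nat, X < INR N.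
Proof.
  destruct (archimed X) as [H1 _].
  destruct (Z.le_gt_cases 0 (up X)) as [Hz|Hz].
  - exists (Z.to_nat (up X)). rewrite INR_IZR_INZ, Z2Nat.id by lia. lra.
  - exists 0%nat. simpl. apply IZR_lt in Hz. lra.
Qed.

Lemma large_T alpha n k : 1 <= alpha -> (0 < k)%nat ->
  exists T0 : nat, forall T : nat, (T0 <= T)%nat ->
    (0 < T)%nat /\ eps k T alpha <= / (40 * (INR n + 1)) /\
    INR k <= eps k T alpha ^ 2 * INR T.
Proof.
  intros Ha Hk.
  assert (Hn : 0 < INR n + 1) by (assert (0 <= INR n) by apply pos_INR; lra).
  assert (Hk' : 0 < INR k) by (apply lt_0_INR; lia).
  destruct (nat_above (INR k * Rpower (10 * (INR n + 1)) (2 + 2 * alpha))) as [N HN].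
  exists (Nat.max N 1). intros T HT.
  assert (HT0 : (0 < T)%nat) by lia.
  assert (HT' : 0 < INR T) by (apply lt_0_INR; lia).
  assert (HNT : INR N <= INR T) by (apply le_INR; lia).
  assert (P := Rpower_pos' (10 * (INR n + 1)) (2 + 2 * alpha)).
  assert (HX : ln (INR k) + (2 + 2 * alpha) * ln (10 * (INR n + 1)) < ln (INR T)).
  { rewrite <- ln_Rpower, <- ln_mult by (auto; lra). apply ln_increasing; [nra|lra]. }
  set (e := eps k T alpha).
  assert (He := eps_pos k T alpha). fold e in He.
  assert (Hkey := eps_key k T alpha Hk HT0 ltac:(lra)). fold e in Hkey.
  assert (Hle : ln e < - ln (40 * (INR n + 1))).
  { replace (40 * (INR n + 1)) with (4 * (10 * (INR n + 1))) by ring.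
    rewrite ln_mult by lra. rewrite ln16 in Hkey. nra. }
  split; [auto|split].
  - left. apply ln_lt_inv; auto. apply Rinv_0_lt_compat; lra.
    rewrite ln_Rinv by lra. lra.
  - assert (L40 : ln 16 <= ln (40 * (INR n + 1))) by (apply ln_le'; assert (0 <= INR n) by apply pos_INR; lra).
    assert (L16 := ln16_pos).
    apply ln_le_inv; auto.
    + apply Rmult_lt_0_compat; auto. apply pow_lt; auto.
    + rewrite ln_mult by (try apply pow_lt; auto). rewrite ln_pow by auto.
      replace (INR 2) with 2 by (simpl; ring).
      assert (alpha * ln e <= alpha * (- ln 16)) by (apply Rmult_le_compat_l; lra).
      assert ((alpha - 1) * ln 16 >= 0) by (apply Rle_ge, Rmult_le_pos; lra).
      lra.
Qed.


Lemma fold_max_le (l : list R) x0 M : x0 <= M -> (forall x, In x l -> x <= M) ->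
  fold_right Rmax x0 l <= M.
Proof.
  induction l; simpl; intros; auto. apply Rmax_lub; auto.
Qed.

Lemma fold_max_ge (l : list R) x0 x : In x l -> x <= fold_right Rmax x0 l.
Proof.
  induction l; simpl; intros H; [tauto|]. destruct H as [H|H].
  - subst. apply Rmax_l.
  - eapply Rle_trans; [apply IHl; auto| apply Rmax_r].
Qed.

Lemma mu_star_eq n mu M i0 : (1 <= i0 <= n)%nat -> mu i0 = M ->
  (forall i, (1 <= i <= n)%nat -> mu i <= M) -> mu_star n mu = M.
Proof.
  intros Hi0 HM Hall. unfold mu_star. apply Rle_antisym.
  - apply fold_max_le; [apply Hall; lia|]. intros x Hx. apply in_map_iff in Hx.
    destruct Hx as [i [<- Hi]]. apply in_seq in Hi. apply Hall. lia.
  - rewrite <- HM. apply fold_max_ge. apply in_map. apply in_seq. lia.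
Qed.

Section Inst.
Variables n k : nat.
Variable e : R.
Hypothesis Hk : (2 <= k)%nat.
Hypothesis Hkn : (k < n)%nat.
Hypothesis He : 0 < e.
Hypothesis Hsmall : e * (INR n + 1) <= / 40.

Lemma INR_pred : INR (n - 1) = INR n - 1.
Proof. rewrite minus_INR by lia. simpl. ring. Qed.

Lemma hm_j j pr : (2 <= j)%nat -> hard_mean n k e j pr j = / 2 + (INR n + 1) * e.
Proof.
  intros. unfold hard_mean. replace (Nat.leb 2 j) with true by (symmetry; apply Nat.leb_le; lia).
  rewrite Nat.eqb_refl. cbn [andb]. rewrite S_INR. reflexivity.
Qed.

Lemma hm_1 j pr : hard_mean n k e j pr 1 = / 2 + INR n * e.
Proof.
  unfold hard_mean. destruct (Nat.leb 2 j) eqn:E1; destruct (Nat.eqb 1 j) eqn:E2; simpl; auto.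
  apply Nat.leb_le in E1. apply Nat.eqb_eq in E2. lia.
Qed.

Lemma hm_h j pr i : i <> 1%nat -> (i <= k)%nat -> ((j < 2)%nat \/ i <> j) ->
  hard_mean n k e j pr i = / 2 + (INR n - 1) * e.
Proof.
  intros H1 H2 H3. unfold hard_mean.
  assert (E : (Nat.leb 2 j && Nat.eqb i j)%bool = false).
  { destruct (Nat.leb 2 j) eqn:E1; destruct (Nat.eqb i j) eqn:E2; auto.
    apply Nat.leb_le in E1. apply Nat.eqb_eq in E2. lia. }
  rewrite E.
  replace (Nat.eqb i 1) with false by (symmetry; apply Nat.eqb_neq; auto).
  replace (Nat.leb i k) with true by (symmetry; apply Nat.leb_le; auto).
  rewrite INR_pred; reflexivity.
Qed.

Lemma hm_t j pr i : (k < i)%nat -> (j <= k)%nat ->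
  hard_mean n k e j pr i = if pr then 1 else / 2.
Proof.
  intros H1 H2. unfold hard_mean.
  replace (Nat.eqb i j) with false by (symmetry; apply Nat.eqb_neq; lia).
  replace (Nat.eqb i 1) with false by (symmetry; apply Nat.eqb_neq; lia).
  replace (Nat.leb i k) with false by (symmetry; apply Nat.leb_gt; lia).
  rewrite andb_false_r. reflexivity.
Qed.

Definition Mj (j : nat) : R := if Nat.leb 2 j then / 2 + (INR n + 1) * e else / 2 + INR n * e.

Lemma npos : 2 <= INR n.
Proof. replace 2 with (INR 2) by (simpl; ring). apply le_INR. lia. Qed.

Lemma hm_cases j pr i : (1 <= j <= k)%nat ->
  (i = j /\ (2 <= j)%nat /\ hard_mean n k e j pr i = / 2 + (INR n + 1) * e) \/
  (i = 1%nat /\ hard_mean n k e j pr i = / 2 + INR n * e) \/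
  (i <> j /\ i <> 1%nat /\ (i <= k)%nat /\ hard_mean n k e j pr i = / 2 + (INR n - 1) * e) \/
  ((k < i)%nat /\ hard_mean n k e j pr i = if pr then 1 else / 2).
Proof.
  intros Hj.
  destruct (Nat.eq_dec i 1) as [->|H1]; [right; left; split; auto; apply hm_1|].
  destruct (le_lt_dec i k) as [Hik|Hik]; [|right; right; right; split; auto; apply hm_t; lia].
  destruct (Nat.eq_dec i j) as [->|Hij].
  - left. repeat split; auto; [lia|apply hm_j; lia].
  - right; right; left. repeat split; auto. apply hm_h; auto.
Qed.

Lemma unprimed_facts j : (1 <= j <= k)%nat ->
  mu_star n (hard_mean n k e j false) = Mj j /\
  (forall i, 0 <= hard_mean n k e j false i <= 1 /\ hard_mean n k e j false i <= Mj j) /\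
  (forall i, i <> j -> e <= Mj j - hard_mean n k e j false i) /\
  (forall i, (k < i)%nat -> INR n * e <= Mj j - hard_mean n k e j false i) /\
  (forall i, (i <= k)%nat -> 0 < hard_mean n k e j false i < 1).
Proof.
  intros Hj. assert (Hn := npos).
  assert (Hne : 0 <= INR n * e) by nra.
  assert (Hne2 : INR n * e <= / 40) by nra.
  unfold Mj. destruct (Nat.leb 2 j) eqn:E2.
  - apply Nat.leb_le in E2.
    split; [apply mu_star_eq with (i0 := j); [lia|apply hm_j; lia|]|].
    { intros i _. destruct (hm_cases j false i Hj) as [(_&_&->)|[(_&->)|[(_&_&_&->)|(_&->)]]]; nra. }
    split; [intros i; destruct (hm_cases j false i Hj) as [(_&_&->)|[(_&->)|[(_&_&_&->)|(_&->)]]]; nra|].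
    split; [intros i Hi; destruct (hm_cases j false i Hj) as [(?&_&->)|[(_&->)|[(_&_&_&->)|(_&->)]]]; try tauto; nra|].
    split; [intros i Hi; rewrite hm_t by lia; nra|].
    intros i Hi; destruct (hm_cases j false i Hj) as [(_&_&->)|[(_&->)|[(_&_&_&->)|(?&->)]]]; try lia; nra.
  - apply Nat.leb_gt in E2. assert (j = 1%nat) by lia. subst j.
    split; [apply mu_star_eq with (i0 := 1%nat); [lia|apply hm_1|]|].
    { intros i _. destruct (hm_cases 1 false i Hj) as [(_&?&_)|[(_&->)|[(_&_&_&->)|(_&->)]]]; try lia; nra. }
    split; [intros i; destruct (hm_cases 1 false i Hj) as [(_&?&_)|[(_&->)|[(_&_&_&->)|(_&->)]]]; try lia; nra|].
    split; [intros i Hi; destruct (hm_cases 1 false i Hj) as [(_&?&_)|[(?&->)|[(_&_&_&->)|(_&->)]]]; try lia; try tauto; nra|].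
    split; [intros i Hi; rewrite hm_t by lia; nra|].
    intros i Hi; destruct (hm_cases 1 false i Hj) as [(_&?&_)|[(_&->)|[(_&_&_&->)|(?&->)]]]; try lia; nra.
Qed.

Lemma primed_facts :
  mu_star n (hard_mean n k e 1 true) = 1 /\
  (forall i, 0 <= hard_mean n k e 1 true i <= 1) /\
  (forall i, (i <= k)%nat -> 19 / 40 <= 1 - hard_mean n k e 1 true i) /\
  (forall i, (k < i)%nat -> hard_mean n k e 1 true i = 1).
Proof.
  assert (Hj : (1 <= 1 <= k)%nat) by lia. assert (Hn := npos).
  assert (Hne : 0 <= INR n * e) by nra.
  assert (Hne2 : INR n * e <= / 40) by nra.
  split; [apply mu_star_eq with (i0 := n); [lia|rewrite hm_t; auto; lia|]|].
  { intros i _. destruct (hm_cases 1 true i Hj) as [(_&?&_)|[(_&->)|[(_&_&_&->)|(_&->)]]]; try lia; nra. }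
  split; [intros i; destruct (hm_cases 1 true i Hj) as [(_&?&_)|[(_&->)|[(_&_&_&->)|(_&->)]]]; try lia; nra|].
  split; [intros i Hi; destruct (hm_cases 1 true i Hj) as [(_&?&_)|[(_&->)|[(_&_&_&->)|(?&->)]]]; try lia; nra|].
  intros i Hi. rewrite hm_t; auto; lia.
Qed.

Lemma agree_1j j i : i <> j -> hard_mean n k e 1 false i = hard_mean n k e j false i.
Proof.
  intros H. unfold hard_mean. simpl.
  replace (Nat.eqb i j) with false by (symmetry; apply Nat.eqb_neq; auto).
  rewrite andb_false_r. reflexivity.
Qed.

Lemma agree_primed i : (i <= k)%nat -> hard_mean n k e 1 false i = hard_mean n k e 1 true i.
Proof.
  intros H. unfold hard_mean. simpl.
  destruct (Nat.eqb i 1); auto. replace (Nat.leb i k) with true by (symmetry; apply Nat.leb_le; auto).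
  reflexivity.
Qed.

End Inst.

Lemma sgp_bound n mu alpha C b : 0 <= C ->
  (forall i, (1 <= i <= n)%nat -> 0 < gap n mu i -> C * Rpower (gap n mu i) (1 - 2 * alpha) <= b i) ->
  (forall i, 0 <= b i) ->
  C * sum_gap_pow n mu alpha <= sumj (seq 1 n) b.
Proof.
  intros HC Hb Hb0. unfold sum_gap_pow.
  assert (Hin : forall i, In i (seq 1 n) -> (1 <= i <= n)%nat) by (intros i Hi; apply in_seq in Hi; lia).
  revert Hin. generalize (seq 1 n). intros l Hin. induction l as [|i l IH]; simpl; [lra|].
  rewrite Rmult_plus_distr_l.
  assert (C * fold_right (fun i acc => (if Rlt_dec 0 (gap n mu i) then Rpower (gap n mu i) (1 - 2 * alpha) else 0) + acc) 0 l <= sumj l b)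
    by (apply IH; intros; apply Hin; simpl; auto).
  destruct (Rlt_dec 0 (gap n mu i)) as [Hg|Hg].
  - assert (C * Rpower (gap n mu i) (1 - 2 * alpha) <= b i) by (apply Hb; auto; apply Hin; simpl; auto). lra.
  - specialize (Hb0 i). lra.
Qed.

Lemma sumj_split n k a b : (k <= n)%nat ->
  sumj (seq 1 n) (fun i => if Nat.leb i k then a else b) = INR k * a + INR (n - k) * b.
Proof.
  intros Hkn. replace n with (k + (n - k))%nat at 1 by lia. rewrite seq_app.
  assert (forall l F G, sumj (l ++ G) F = sumj l F + sumj G F) as Happ.
  { induction l; simpl; intros; [lra|]. rewrite IHl. ring. }
  rewrite Happ.
  assert (E1 : sumj (seq 1 k) (fun i => if Nat.leb i k then a else b) = sumj (seq 1 k) (fun _ => a)).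
  { apply sumj_ext. intros x Hx. apply in_seq in Hx. replace (Nat.leb x k) with true; auto.
    symmetry; apply Nat.leb_le; lia. }
  assert (E2 : sumj (seq (1 + k) (n - k)) (fun i => if Nat.leb i k then a else b) = sumj (seq (1 + k) (n - k)) (fun _ => b)).
  { apply sumj_ext. intros x Hx. apply in_seq in Hx. replace (Nat.leb x k) with false; auto.
    symmetry; apply Nat.leb_gt; lia. }
  rewrite E1, E2.
  assert (forall s len c, sumj (seq s len) (fun _ => c) = INR len * c) as Hc.
  { intros s len c. revert s. induction len; intros s; [simpl; lra|].
    change (seq s (S len)) with (s :: seq (S s) len).
    change (sumj (s :: seq (S s) len) (fun _ => c)) with (c + sumj (seq (S s) len) (fun _ => c)).
    rewrite IHlen, S_INR. ring. }
  rewrite !Hc. reflexivity.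
Qed.


Lemma sumj_scal l c F : sumj l (fun x => c * F x) = c * sumj l F.
Proof. induction l; simpl; [ring|]. rewrite IHl. ring. Qed.

Lemma sumj_const l c : sumj l (fun _ => c) = INR (length l) * c.
Proof.
  induction l; [simpl; ring|].
  change (sumj (a :: l) (fun _ => c)) with (c + sumj l (fun _ => c)). rewrite IHl.
  change (length (a :: l)) with (S (length l)). rewrite S_INR. ring.
Qed.

Section S8.
Variable A : algorithm.
Variable T : nat.
Variables n m : nat.
Hypothesis HA : is_streaming_alg n m A.

Lemma EvS mu k r G s h :
  Ev A T mu k (fun _ => 0) (fun s a => r * G s a) 0 s h = r * Ev A T mu k (fun _ => 0) G 0 s h.
Proof.
  rewrite <- Ev_scal. apply Ev_congr_le; intros; ring.
Qed.

Lemma EvSmooth mu k eta G s h : hist_valid n m h ->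
  Ev A T mu k (fun _ => 0) (fun s a => eta + (1 - 2 * eta) * G s a) eta s h
  = eta + (1 - 2 * eta) * Ev A T mu k (fun _ => 0) G 0 s h.
Proof.
  intros Hh. rewrite <- EvS.
  rewrite <- (Ev_const A T n m HA mu k eta s h Hh) at 2.
  rewrite <- Ev_lin. apply Ev_congr_le; intros; ring.
Qed.

Lemma EvSplit mu k s h (b : nat -> bool) : hist_valid n m h ->
  Ev A T mu k (fun _ => 0) (fun s a => if b s then 1 else 0) 0 s h +
  Ev A T mu k (fun _ => 0) (fun s a => if b s then 0 else 1) 1 s h = 1.
Proof.
  intros Hh. rewrite <- Ev_lin.
  rewrite <- (Ev_const A T n m HA mu k 1 s h Hh) at 2.
  apply Ev_congr_le; intros; try ring. destruct (b s'); ring.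
Qed.
End S8.

Lemma hell_poly a b x : 0 <= a -> 0 <= b -> (a - b) ^ 2 <= x ->
  3 / 4 * a ^ 2 - 4 * x <= b ^ 2.
Proof. intros. assert (0 <= (a / 2 - 2 * (a - b)) ^ 2) by apply pow2_ge_0. nra. Qed.

Theorem theorem4p1 (alpha : R) (n m k : nat) (A : algorithm) :
  1 <= alpha -> (2 <= m)%nat -> (m <= k)%nat -> (k < n)%nat ->
  is_streaming_alg n m A ->
  exists T0 : nat, forall T : nat, (T0 <= T)%nat ->
    exists (j : nat) (primed : bool),
      (1 <= j <= k)%nat /\
      exp_regret n A T (hard_mean n k (eps k T alpha) j primed) >
        2 / Rpower 16 (alpha + 1)
        * (INR (k - m + 1) * Rpower (INR T) (1 / (alpha + 1))
           / Rpower (INR k) (1 + 1 / (alpha + 1)))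
        * sum_gap_pow n (hard_mean n k (eps k T alpha) j primed) alpha.
Proof.
  intros Ha Hm Hmk Hkn HA.
  assert (Hk0 : (0 < k)%nat) by lia.
  destruct (large_T alpha n k Ha Hk0) as [T0 HT0]. exists T0. intros T HT.
  destruct (HT0 T HT) as (HTpos & Hesmall & HeT). clear HT0.
  assert (He := eps_pos k T alpha).
  assert (Hkey := eps_key k T alpha Hk0 HTpos ltac:(lra)).
  set (e := eps k T alpha) in *.
  assert (Hn0 : 0 <= INR n) by apply pos_INR.
  assert (Hsmall : e * (INR n + 1) <= / 40).
  { replace (/ 40) with (/ (40 * (INR n + 1)) * (INR n + 1)) by (field; lra).
    apply Rmult_le_compat_r; lra. }
  assert (Hk' : 0 < INR k) by (apply lt_0_INR; lia).
  assert (Hk2 : 2 <= INR k) by (replace 2 with (INR 2) by (simpl; ring); apply le_INR; lia).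
  assert (HT' : 0 < INR T) by (apply lt_0_INR; lia).
  set (K := INR (k - m + 1)).
  assert (HK1 : 1 <= K) by (unfold K; replace 1 with (INR 1) by reflexivity; apply le_INR; lia).
  assert (HKk : K <= INR k) by (unfold K; apply le_INR; lia).
  set (C := 2 / Rpower 16 (alpha + 1)).
  assert (HC : 0 < C) by (apply Rdiv_lt_0_compat; [lra|apply Rpower_pos']).
  assert (Hfront : forall sg, C * (K * Rpower (INR T) (1 / (alpha + 1)) / Rpower (INR k) (1 + 1 / (alpha + 1))) * sg
      = K / (16 * e ^ 2 * INR k) * (C * sg)).
  { intros sg. assert (F := front_id alpha k T Ha e Hkey He Hk').
    unfold Rdiv in *. rewrite <- F. ring. }
  assert (Hfpos : 0 <= K / (16 * e ^ 2 * INR k)).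
  { apply Rlt_le, Rdiv_lt_0_compat; [lra|]. assert (0 < e ^ 2) by (apply pow_lt; auto). nra. }
  set (mu0 := hard_mean n k e 1 false).
  set (S := Ev A T mu0 k (fun _ => 1) (fun _ _ => 0) 0 T []).
  assert (Hhead0 : headok mu0 k).
  { intros i Hi. destruct (unprimed_facts n k e ltac:(lia) Hkn He Hsmall 1 ltac:(lia)) as (_&_&_&_&H5).
    specialize (H5 i Hi). unfold mu0. lra. }
  destruct (Rle_lt_dec S (K / (400 * e ^ 2))) as [HS|HS].
  2: {
  exists 1%nat, true. split; [lia|].
  destruct (primed_facts n k e ltac:(lia) Hkn He Hsmall) as (Pms & P01 & Pg & Pt).
  set (mu0p := hard_mean n k e 1 true) in *.
  unfold exp_regret. rewrite Pms.
  assert (Hreg := er_primed A T n m mu0p 1 k (19/40) T [] HA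
     ltac:(intros i; specialize (P01 i); split; lra) Pg (hv_nil n m)).
  assert (Escal : Ev A T mu0p k (fun _ => 19/40) (fun _ _ => 0) 0 T [] = 19/40 * S).
  { transitivity (Ev A T mu0p k (fun a => 19/40 * 1) (fun s a => 19/40 * 0) (19/40 * 0) T []).
    { apply Ev_congr_le; intros; ring. }
    rewrite Ev_scal. f_equal. unfold S. apply Ev_ext. intros i Hi. unfold mu0p, mu0.
    symmetry; apply agree_primed; auto. }
  rewrite Hfront.
  assert (Hsg : C * sum_gap_pow n mu0p alpha <= INR k * (40 / (128 * 19))).
  { eapply Rle_trans. apply sgp_bound with (b := fun i => if Nat.leb i k then 40/(128*19) else 0).
    - lra.
    - intros i Hi Hg. unfold gap in *. rewrite Pms in *. destruct (le_lt_dec i k) as [Hik|Hik].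
      + replace (Nat.leb i k) with true by (symmetry; apply Nat.leb_le; auto).
        assert (G1 := Pg i Hik). eapply Rle_trans; [apply term_primed; lra|].
        replace (40 / (128 * 19)) with (/ (128 * (19 / 40))) by (field; lra).
        apply Rinv_le_contravar; lra.
      + rewrite Pt in Hg by auto. lra.
    - intros i. destruct (Nat.leb i k); lra.
    - rewrite sumj_split by lia. lra. }
  assert (He2 : 0 < e ^ 2) by (apply pow_lt; auto).
  assert (Eq1 : K / (16 * e ^ 2 * INR k) * (INR k * (40 / (128 * 19))) = K / e ^ 2 * (40 / (16 * 128 * 19)))
    by (field; split; lra).
  assert (Eq2 : 19 / 40 * (K / (400 * e ^ 2)) = K / e ^ 2 * (19 / 16000)) by (field; lra).
  assert (Hy : 0 < K / e ^ 2) by (apply Rdiv_lt_0_compat; lra).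
  assert (B1 : K / (16 * e ^ 2 * INR k) * (C * sum_gap_pow n mu0p alpha) <=
               K / (16 * e ^ 2 * INR k) * (INR k * (40 / (128 * 19)))) by (apply Rmult_le_compat_l; auto).
  assert (B2 : 19 / 40 * (K / (400 * e ^ 2)) < 19 / 40 * S) by lra.
  lra. }
  assert (Hkk : (2 <= k)%nat) by lia.
  set (muj := fun j => hard_mean n k e j false).
  set (f := fun j => Ev A T mu0 k (fun _ => 0) (fun s a => indE T j k s a) 0 T []).
  set (p := fun j => Ev A T (muj j) k (fun _ => 0) (fun s a => indE T j k s a) 0 T []).
  set (N := fun j => Ev A T mu0 k (Npull j) (fun _ _ => 0) 0 T []).
  assert (Hind01 : forall j s a, 0 <= indE T j k s a <= 1).
  { intros. unfold indE. destruct (in_dec Nat.eq_dec j (act_mem a)); [lra|].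
    destruct (Nat.leb T (2 * s)); lra. }
  assert (Hf01 : forall j, 0 <= f j <= 1).
  { intros j. unfold f. apply (Ev_range A T n m HA); [exact Hhead0 | intros; apply Hind01 | lra | constructor]. }
  assert (SA : K * (199 / 200) <= sumj (seq 1 k) f).
  { set (P := Ev A T mu0 k (fun _ => 0) (fun s a => if Nat.leb T (2 * s) then 1 else 0) 0 T []).
    set (Q := Ev A T mu0 k (fun _ => 0) (fun s a => if Nat.leb T (2 * s) then 0 else 1) 1 T []).
    assert (PQ : P + Q = 1) by (apply (EvSplit A T n m HA mu0 k T [] (fun s => Nat.leb T (2 * s))); constructor).
    assert (MQ : INR T / 2 * Q <= S) by (apply (Ev_markov A T n m HA); auto; constructor).
    assert (Q0 : 0 <= Q).
    { unfold Q. apply (Ev_range A T n m HA mu0 k _ 1 0 1); auto; [|lra|constructor].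
      intros. destruct (Nat.leb T (2 * s)); lra. }
    assert (QS : Q <= / 200).
    { assert (He2 : 0 < e ^ 2) by (apply pow_lt; auto).
      assert (X1 : Q * (e ^ 2 * INR T) <= 2 * K / 400).
      { assert (INR T / 2 * Q <= K / (400 * e ^ 2)) by lra.
        apply Rmult_le_compat_l with (r := 2 * e ^ 2) in H; [|lra].
        replace (2 * e ^ 2 * (K / (400 * e ^ 2))) with (2 * K / 400) in H by (field; lra). nra. }
      assert (X2 : Q * K <= Q * (e ^ 2 * INR T)) by (apply Rmult_le_compat_l; lra).
      nra. }
    assert (E1 : sumj (seq 1 k) f = Ev A T mu0 k (fun a => sumj (seq 1 k) (fun j => 0))
        (fun s a => sumj (seq 1 k) (fun j => indE T j k s a)) (sumj (seq 1 k) (fun _ => 0)) T []).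
    { symmetry. apply (Ev_sum A T n m HA mu0 k (seq 1 k) (fun j a => 0) (fun j s a => indE T j k s a) (fun j => 0) T []).
      constructor. }
    assert (E2 : Ev A T mu0 k (fun _ => 0) (fun s a => if Nat.ltb k (act_pull a) then K * (if Nat.leb T (2 * s) then 1 else 0) else 0) 0 T []
       = K * P).
    { unfold P. rewrite <- EvS. apply Ev_congr_le; auto. intros s' a _ Hka.
      apply Nat.ltb_lt in Hka. rewrite Hka. reflexivity. }
    assert (E3 : Ev A T mu0 k (fun _ => 0) (fun s a => if Nat.ltb k (act_pull a) then K * (if Nat.leb T (2 * s) then 1 else 0) else 0) 0 T []
       <= sumj (seq 1 k) f).
    { rewrite E1. apply (Ev_mono A T n m HA); auto; [| |rewrite sumj_const; lra|constructor].
      - intros. rewrite sumj_const. lra.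
      - intros s' a st Hv. destruct (Nat.ltb k (act_pull a)) eqn:Ek.
        + apply Nat.ltb_lt in Ek. apply (stop_count n m k st a T s'); auto.
        + apply Rle_trans with (sumj (seq 1 k) (fun _ => 0)); [rewrite sumj_const; lra|].
          apply sumj_le. intros. apply Hind01. }
    nra. }
  set (eta := / (16 * INR k)).
  assert (Heta : 0 < eta) by (unfold eta; apply Rinv_0_lt_compat; lra).
  assert (Heta2 : eta <= / 32).
  { unfold eta. apply Rinv_le_contravar; lra. }
  assert (HN0 : forall j, 0 <= N j).
  { intros j. unfold N.
    apply Rle_trans with (Ev A T mu0 k (fun _ => 0) (fun _ _ => 0) 0 T []).
    { right. symmetry. apply (Ev_const A T n m HA). constructor. }
    apply (Ev_mono A T n m HA).
    - exact Hhead0.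
    - intros a0 st0 _. unfold Npull. cbv beta. destruct (Nat.eqb (act_pull a0) j); lra.
    - intros. lra.
    - lra.
    - constructor. }
  assert (SB : forall j, (2 <= j <= k)%nat ->
     3 / 4 * f j - 16 / 15 * (eta / 4 + 68 * e ^ 2 * N j) <= p j).
  { intros j Hj.
    destruct (unprimed_facts n k e Hkk Hkn He Hsmall 1 ltac:(lia)) as (_ & _ & _ & _ & F5).
    destruct (unprimed_facts n k e Hkk Hkn He Hsmall j ltac:(lia)) as (_ & _ & _ & _ & G5).
    set (g := fun s a => eta + (1 - 2 * eta) * indE T j k s a).
    assert (Hg : forall s a, eta <= g s a <= 1 - eta).
    { intros s0 a. unfold g. destruct (Hind01 j s0 a). split; nra. }
    assert (Hmuj : headok (muj j) k) by (intros i Hi; specialize (G5 i Hi); unfold muj; lra).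
    assert (KL := Ev_kl A T n m HA mu0 (muj j) k j
       ltac:(intros i Hi; unfold mu0, muj; apply agree_1j; auto)
       ltac:(intros i Hi; split; [apply F5|apply G5]; auto)
       eta Heta g eta Hg ltac:(lra) T [] (hv_nil n m)).
    fold (N j) in KL.
    assert (EF : Ev A T mu0 k (fun _ => 0) g eta T [] = eta + (1 - 2 * eta) * f j).
    { unfold g, f. apply (EvSmooth A T n m HA). constructor. }
    assert (EP : Ev A T (muj j) k (fun _ => 0) g eta T [] = eta + (1 - 2 * eta) * p j).
    { unfold g, p. apply (EvSmooth A T n m HA). constructor. }
    rewrite EF, EP in KL.
    assert (RF : eta <= eta + (1 - 2 * eta) * f j <= 1 - eta).
    { rewrite <- EF. apply (Ev_range A T n m HA); [exact Hhead0|exact Hg|lra|constructor]. }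
    assert (RP : eta <= eta + (1 - 2 * eta) * p j <= 1 - eta).
    { rewrite <- EP. apply (Ev_range A T n m HA); [exact Hmuj|exact Hg|lra|constructor]. }
    assert (Hq0 : mu0 j = / 2 + (INR n - 1) * e).
    { unfold mu0. apply (hm_h n k e Hkk Hkn); lia. }
    assert (Hq1 : muj j j = / 2 + (INR n + 1) * e).
    { unfold muj. apply (hm_j n k e Hkk Hkn). lia. }
    assert (Hc : kl (mu0 j) (muj j j) <= 17 * e ^ 2).
    { rewrite Hq0, Hq1. eapply Rle_trans; [apply kl_bern; nra|].
      replace ((/ 2 + (INR n - 1) * e - (/ 2 + (INR n + 1) * e)) ^ 2) with (4 * e ^ 2) by ring.
      assert (X1 : (INR n + 1) * e <= / 40) by lra.
      assert (X2 : 0 <= (INR n + 1) * e) by nra.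
      assert (X3 : ((INR n + 1) * e) * ((INR n + 1) * e) <= / 40 * / 40) by (apply Rmult_le_compat; lra).
      assert (Hq : 0.24 <= (/ 2 + (INR n + 1) * e) * (1 - (/ 2 + (INR n + 1) * e))) by nra.
      apply Rle_trans with (4 * e ^ 2 / 0.24).
      - unfold Rdiv. apply Rmult_le_compat_l; [nra|]. apply Rinv_le_contravar; lra.
      - assert (0 <= e ^ 2) by nra. lra. }
    set (F' := eta + (1 - 2 * eta) * f j) in *.
    set (P' := eta + (1 - 2 * eta) * p j) in *.
    assert (HH := kl_hell F' P' ltac:(lra) ltac:(lra)).
    assert (HP := hell_poly (sqrt F') (sqrt P') (kl (mu0 j) (muj j j) * N j)
       ltac:(apply sqrt_pos) ltac:(apply sqrt_pos) ltac:(lra)).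
    rewrite <- !Rsqr_pow2, !Rsqr_sqrt in HP by lra.
    assert (HcN : kl (mu0 j) (muj j j) * N j <= 17 * e ^ 2 * N j) by (apply Rmult_le_compat_r; auto).
    unfold F', P' in *.
    assert (Hf0 := Hf01 j).
    assert (He2 : 0 <= e ^ 2 * N j) by (apply Rmult_le_pos; auto; nra).
    assert (Y : (1 - 2 * eta) * (p j - 3 / 4 * f j) >= - (eta / 4 + 68 * e ^ 2 * N j)) by lra.
    destruct (Rle_dec 0 (p j - 3 / 4 * f j)) as [Y1|Y1].
    - lra.
    - assert (Y2 : (1 - 2 * eta) * (p j - 3 / 4 * f j) <= 15 / 16 * (p j - 3 / 4 * f j)) by nra.
      lra. }
  assert (SC : sumj (seq 2 (k - 1)) N <= S).
  { assert (E1 : sumj (seq 2 (k - 1)) N = Ev A T mu0 k (fun a => sumj (seq 2 (k - 1)) (fun j => Npull j a))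
        (fun s a => sumj (seq 2 (k - 1)) (fun j => 0)) (sumj (seq 2 (k - 1)) (fun _ => 0)) T []).
    { symmetry. apply (Ev_sum A T n m HA mu0 k (seq 2 (k - 1)) (fun j a => Npull j a) (fun j s a => 0) (fun j => 0) T []).
      constructor. }
    rewrite E1. unfold S. apply (Ev_mono A T n m HA).
    - exact Hhead0.
    - intros a0 st0 _. unfold Npull. apply npull_sum. apply seq_NoDup.
    - intros. rewrite sumj_const. lra.
    - rewrite sumj_const. lra.
    - constructor. }
  assert (Hseq : seq 1 k = 1%nat :: seq 2 (k - 1)).
  { destruct k as [|k']; [lia|]. simpl. rewrite Nat.sub_0_r. reflexivity. }
  assert (SD : 3 * K / 8 < sumj (seq 1 k) p).
  { rewrite Hseq in *. change (sumj (1%nat :: seq 2 (k - 1)) p) with (p 1%nat + sumj (seq 2 (k - 1)) p).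
    change (sumj (1%nat :: seq 2 (k - 1)) f) with (f 1%nat + sumj (seq 2 (k - 1)) f) in SA.
    assert (Hp1 : p 1%nat = f 1%nat) by reflexivity.
    assert (L : sumj (seq 2 (k - 1)) (fun j => 3 / 4 * f j + (- (16 / 15) * (eta / 4) + (- (16 / 15 * 68 * e ^ 2)) * N j))
                <= sumj (seq 2 (k - 1)) p).
    { apply sumj_le. intros x Hx. apply in_seq in Hx. specialize (SB x ltac:(lia)). lra. }
    rewrite !sumj_plus, !sumj_scal, sumj_const, length_seq in L.
    assert (Hf1 := Hf01 1%nat).
    assert (HSe : e ^ 2 * S <= K / 400).
    { assert (He2 : 0 < e ^ 2) by (apply pow_lt; auto).
      apply Rmult_le_compat_l with (r := e ^ 2) in HS; [|lra].
      replace (e ^ 2 * (K / (400 * e ^ 2))) with (K / 400) in HS by (field; lra). lra. }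
    assert (HNs : e ^ 2 * sumj (seq 2 (k - 1)) N <= K / 400).
    { assert (e ^ 2 * sumj (seq 2 (k - 1)) N <= e ^ 2 * S) by (apply Rmult_le_compat_l; [nra|auto]). lra. }
    assert (Hk1 : INR (k - 1) * eta <= / 16).
    { unfold eta. rewrite minus_INR by lia. simpl. apply Rmult_le_reg_r with (16 * INR k); [lra|].
      field_simplify; lra. }
    assert (Hsf : 0 <= sumj (seq 2 (k - 1)) f).
    { apply Rle_trans with (sumj (seq 2 (k - 1)) (fun _ => 0)); [rewrite sumj_const; lra|].
      apply sumj_le. intros. apply Hf01. }
    nra. }
  destruct (sumj_exists (seq 1 k) p (3 * K / (8 * INR k))) as [j [Hj Hpj]].
  { rewrite length_seq. replace (3 * K / (8 * INR k) * INR k) with (3 * K / 8) by (field; lra). exact SD. }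
  apply in_seq in Hj.
  exists j, false. split; [lia|].
  destruct (unprimed_facts n k e Hkk Hkn He Hsmall j ltac:(lia)) as (Ums & U01 & Ugap & Utail & Uhead).
  unfold exp_regret. rewrite Ums.
  assert (Hreg := er_unprimed A T n m HA (hard_mean n k e j false) (Mj n e j) U01 j e (Rlt_le _ _ He) Ugap k T []
     ltac:(lia) (hv_nil n m)).
  rewrite (EvS A T) in Hreg.
  change (Ev A T (hard_mean n k e j false) k (fun _ => 0) (fun s a => indE T j k s a) 0 T []) with (p j) in Hreg.
  rewrite Hfront.
  assert (Hself : hard_mean n k e j false j = Mj n e j).
  { unfold Mj. destruct (Nat.leb 2 j) eqn:E2.
    - apply Nat.leb_le in E2. apply (hm_j n k e Hkk Hkn). auto.
    - apply Nat.leb_gt in E2. assert (j = 1%nat) by lia. subst j. apply (hm_1 n k e Hkk Hkn). }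
  assert (Hnpos : 2 <= INR n) by (apply (npos n k Hkk Hkn)).
  assert (Hsg : C * sum_gap_pow n (hard_mean n k e j false) alpha <=
     INR k * (2 * e ^ 4 * INR T / (INR k * e)) + INR (n - k) * (2 * e ^ 4 * INR T / (INR k * (INR n * e)))).
  { eapply Rle_trans. apply sgp_bound with
      (b := fun i => if Nat.leb i k then 2 * e ^ 4 * INR T / (INR k * e) else 2 * e ^ 4 * INR T / (INR k * (INR n * e))).
    - lra.
    - intros i Hi Hg. unfold gap in *. rewrite Ums in *.
      destruct (Nat.eq_dec i j) as [->|Hij]; [rewrite Hself in Hg; lra|].
      assert (G1 := Ugap i Hij).
      assert (T1 := term_unprimed alpha k T Ha e Hkey He Hk' HT' (Mj n e j - hard_mean n k e j false i) G1).
      fold C in T1.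
      assert (He4 : 0 <= 2 * e ^ 4 * INR T) by (assert (0 <= e ^ 4) by (apply pow_le; lra); nra).
      destruct (le_lt_dec i k) as [Hik|Hik].
      + replace (Nat.leb i k) with true by (symmetry; apply Nat.leb_le; auto).
        eapply Rle_trans; [exact T1|]. unfold Rdiv. apply Rmult_le_compat_l; auto.
        apply Rinv_le_contravar; [nra|]. apply Rmult_le_compat_l; lra.
      + replace (Nat.leb i k) with false by (symmetry; apply Nat.leb_gt; auto).
        assert (G2 := Utail i Hik).
        eapply Rle_trans; [exact T1|]. unfold Rdiv. apply Rmult_le_compat_l; auto.
        apply Rinv_le_contravar; [apply Rmult_lt_0_compat; [lra| apply Rmult_lt_0_compat; lra]|].
        apply Rmult_le_compat_l; lra.
    - intros i. assert (P4 : 0 < 2 * e ^ 4 * INR T) by (assert (0 < e ^ 4) by (apply pow_lt; auto); nra).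
      destruct (Nat.leb i k); apply Rlt_le, Rdiv_lt_0_compat; auto.
      + apply Rmult_lt_0_compat; lra.
      + apply Rmult_lt_0_compat; [lra| apply Rmult_lt_0_compat; lra].
    - rewrite sumj_split by lia. lra. }
  assert (Eq : K / (16 * e ^ 2 * INR k) *
     (INR k * (2 * e ^ 4 * INR T / (INR k * e)) + INR (n - k) * (2 * e ^ 4 * INR T / (INR k * (INR n * e))))
     = K * e * INR T / (8 * INR k) * (1 + INR (n - k) / (INR k * INR n))).
  { field. repeat split; lra. }
  assert (Hnk : INR (n - k) / (INR k * INR n) <= / 2).
  { rewrite minus_INR by lia. apply Rmult_le_reg_r with (INR k * INR n); [nra|].
    replace ((INR n - INR k) / (INR k * INR n) * (INR k * INR n)) with (INR n - INR k) by (field; lra).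
    nra. }
  assert (HZ : 0 < K * e * INR T / (8 * INR k)).
  { apply Rdiv_lt_0_compat; [|lra]. apply Rmult_lt_0_compat; [nra|lra]. }
  assert (B1 : K / (16 * e ^ 2 * INR k) * (C * sum_gap_pow n (hard_mean n k e j false) alpha) <=
     K * e * INR T / (8 * INR k) * (3 / 2)).
  { eapply Rle_trans; [apply Rmult_le_compat_l; [exact Hfpos| exact Hsg]|].
    rewrite Eq. apply Rmult_le_compat_l; lra. }
  assert (B2 : e * (INR T / 2) * (3 * K / (8 * INR k)) = K * e * INR T / (8 * INR k) * (3 / 2))
    by (field; lra).
  assert (B3 : e * (INR T / 2) * (3 * K / (8 * INR k)) < e * (INR T / 2) * p j).
  { apply Rmult_lt_compat_l; [nra|auto]. }
  change (Ev A T (hard_mean n k e j false) k (fun _ => 0) (indE T j k) 0 T []) with (p j) in Hreg.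
  lra.
Qed.
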